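(* In the process algebra $\mathcal{G}$ described in the context, if the instance INST has a solution then $X\simeq Y$.
   Context: Process algebras: a triple $(\mathcal{C},\mathcal{A},\Delta)$ of finitely many constants, actions (including silent $\tau$) and rules $X\stackrel{\ell}{\longrightarrow}P$. Processes: $P::=\epsilon\mid X\mid PP'\mid P\|P'$, sequential composition associative, parallel composition associative and commutative, $\epsilon$ a unit for both. Semantics: rules of $\Delta$; if $P\stackrel{\ell}{\longrightarrow}P'$ then $PQ\stackrel{\ell}{\longrightarrow}P'Q$, $P\|Q\stackrel{\ell}{\longrightarrow}P'\|Q$, $Q\|P\stackrel{\ell}{\longrightarrow}Q\|P'$. $\Longrightarrow$ is the reflexive transitive closure of $\stackrel{\tau}{\longrightarrow}$. Branching bisimilarity $\simeq$ is the largest relation $\mathcal{B}$ such that whenever $P\mathcal{B}Q$ and $P\stackrel{\ell}{\longrightarrow}P'$, either $Q\Longrightarrow Q''\stackrel{\ell}{\longrightarrow}Q'$ with $P\mathcal{B}Q''$ and $P'\mathcal{B}Q'$, or $\ell=\tau$ and $P'\mathcal{B}Q$; and symmetrically. The algebra $\mathcal{G}$: fix a finite alphabet $\Sigma$ with $|\Sigma|\ge2$ and a Post Correspondence instance $\mathrm{INST}=\{(u_1,v_1),\dots,(u_n,v_n)\}$ with $u_k,v_k\in\Sigma^{+}$; INST has a solution if there exist $m\ge1$ and $i_1,\dots,i_m\in\{1,\dots,n\}$ with $u_{i_1}\cdots u_{i_m}=v_{i_1}\cdots v_{i_m}$. Let $\mathcal{N}=\{1,\dots,n\}$. Actions: $\{\lambda_U,\lambda_V,\lambda_D,\lambda_I,\lambda_S,\lambda_Z\}\cup\mathcal{N}\cup\Sigma\cup\{\tau\}$.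 Constants: $X,Y,Z,I,S,C,C',D,G,G',G_u,G_v,G_v'$, $U_k,V_k$ ($k\in\mathcal{N}$), and $W(\omega,k),W(\omega,0)$ for $k\in\mathcal{N}$ and $\omega$ a (possibly empty) suffix of $u_k$ or of $v_k$; $\mathcal{W}$ is the set of these $W$-constants. Rules (with $k$ ranging over $\mathcal{N}$, $a$ over $\Sigma$, $W$ over $\mathcal{W}$): $X\stackrel{\lambda_U}{\longrightarrow}D\|G_v$, $X\stackrel{\tau}{\longrightarrow}D$, $Y\stackrel{\tau}{\longrightarrow}D$, $D\stackrel{\tau}{\longrightarrow}D\|G_u$, $D\stackrel{\lambda_D}{\longrightarrow}C$; $G_u\stackrel{\tau}{\longrightarrow}G_uU_k$, $G_u\stackrel{\lambda_U}{\longrightarrow}G_vU_k$, $G_u\stackrel{\tau}{\longrightarrow}G_v'$, $G_v'\stackrel{\tau}{\longrightarrow}G_v'V_k$, $G_v'\stackrel{\tau}{\longrightarrow}Z$; $G_v\stackrel{\tau}{\longrightarrow}G_vV_k$, $G_v\stackrel{\tau}{\longrightarrow}\epsilon$, $G_v\stackrel{\lambda_V}{\longrightarrow}Z$, $Z\stackrel{\tau}{\longrightarrow}\epsilon$, $Z\stackrel{\lambda_Z}{\longrightarrow}\epsilon$; $C\stackrel{\lambda_I}{\longrightarrow}I$, $C\stackrel{\lambda_S}{\longrightarrow}S$, $C\stackrel{\tau}{\longrightarrow}C\|G$, $C\stackrel{\tau}{\longrightarrow}C\|G_v$; $G\stackrel{\tau}{\longrightarrow}GU_k$, $G\stackrel{\tau}{\longrightarrow}GV_k$,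 $G\stackrel{\tau}{\longrightarrow}\epsilon$; $I\stackrel{\lambda_I}{\longrightarrow}C'$, $I\stackrel{k}{\longrightarrow}I$, $S\stackrel{\lambda_S}{\longrightarrow}C'$, $S\stackrel{a}{\longrightarrow}S$, $C'\stackrel{\tau}{\longrightarrow}C'\|G'$, $C'\stackrel{\tau}{\longrightarrow}\epsilon$; $G'\stackrel{\tau}{\longrightarrow}G'U_k$, $G'\stackrel{\tau}{\longrightarrow}G'V_k$, $G'\stackrel{\tau}{\longrightarrow}G'W$, $G'\stackrel{\tau}{\longrightarrow}G_v$, $G'\stackrel{\tau}{\longrightarrow}Z$; $U_k\stackrel{\tau}{\longrightarrow}W(u_k,k)$, $V_k\stackrel{\tau}{\longrightarrow}W(v_k,k)$; $W(a\omega,k)\stackrel{a}{\longrightarrow}W(\omega,k)$, $W(a\omega,0)\stackrel{a}{\longrightarrow}W(\omega,0)$, $W(\omega,k)\stackrel{k}{\longrightarrow}W(\omega,0)$, $W(a\omega,k)\stackrel{\tau}{\longrightarrow}W(\omega,k)$, $W(a\omega,0)\stackrel{\tau}{\longrightarrow}W(\omega,0)$, $W(\omega,k)\stackrel{\tau}{\longrightarrow}W(\omega,0)$, $W(\epsilon,0)\stackrel{\tau}{\longrightarrow}\epsilon$. *)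

(* Defs.v *)
From mathcomp Require Import all_boot.
From Stdlib Require Import Relations.Relation_Operators.

Set Implicit Arguments.
Unset Strict Implicit.
Unset Printing Implicit Defensive.

Inductive proc (C : Type) : Type :=
| Eps : proc C
| Cst : C -> proc C
| Seq : proc C -> proc C -> proc C
| Par : proc C -> proc C -> proc C.
Arguments Eps {C}.

(* Structural congruence: sequential composition associative, parallel
   composition associative and commutative, eps a unit for both. Processes
   are identified up to this congruence. *)
Inductive pcong (C : Type) : proc C -> proc C -> Prop :=
| pc_refl p : pcong p p
| pc_sym p q : pcong p q -> pcong q p
| pc_trans p q r : pcong p q -> pcong q r -> pcong p r
| pc_seq p p' q q' : pcong p p' -> pcong q q' -> pcong (Seq p q) (Seq p' q')
| pc_par p p' q q' : pcong p p' -> pcong q q' -> pcong (Par p q) (Par p' q')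
| pc_seqA p q r : pcong (Seq (Seq p q) r) (Seq p (Seq q r))
| pc_parA p q r : pcong (Par (Par p q) r) (Par p (Par q r))
| pc_parC p q : pcong (Par p q) (Par q p)
| pc_seq_epsl p : pcong (Seq Eps p) p
| pc_seq_epsr p : pcong (Seq p Eps) p
| pc_par_epsl p : pcong (Par Eps p) p.

Inductive sstep (C A : Type) (Delta : C -> A -> proc C -> Prop)
  : proc C -> A -> proc C -> Prop :=
| ss_rule c l p : Delta c l p -> sstep Delta (Cst c) l p
| ss_seq p l p' q : sstep Delta p l p' -> sstep Delta (Seq p q) l (Seq p' q)
| ss_parl p l p' q : sstep Delta p l p' -> sstep Delta (Par p q) l (Par p' q)
| ss_parr p l p' q : sstep Delta p l p' -> sstep Delta (Par q p) l (Par q p').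

Definition step (C A : Type) (Delta : C -> A -> proc C -> Prop)
  (P : proc C) (l : A) (P' : proc C) : Prop :=
  exists Q Q', pcong P Q /\ sstep Delta Q l Q' /\ pcong Q' P'.

Definition tau_steps (C A : Type) (Delta : C -> A -> proc C -> Prop) (tau : A)
  : proc C -> proc C -> Prop :=
  clos_refl_trans (proc C) (fun P P' => step Delta P tau P').

Definition branching_bisimulation (C A : Type) (Delta : C -> A -> proc C -> Prop)
  (tau : A) (B : proc C -> proc C -> Prop) : Prop :=
  (forall P Q l P', B P Q -> step Delta P l P' ->
     (exists Q'' Q', tau_steps Delta tau Q Q'' /\ step Delta Q'' l Q'
                     /\ B P Q'' /\ B P' Q')
     \/ (l = tau /\ B P' Q))
  /\
  (forall P Q l Q', B P Q -> step Delta Q l Q' ->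
     (exists P'' P', tau_steps Delta tau P P'' /\ step Delta P'' l P'
                     /\ B P'' Q /\ B P' Q')
     \/ (l = tau /\ B P Q')).

Definition branching_bisimilar (C A : Type) (Delta : C -> A -> proc C -> Prop)
  (tau : A) (P Q : proc C) : Prop :=
  exists B, branching_bisimulation Delta tau B /\ B P Q.

(* Indices k range over 'I_n (0-based instead of 1..n); the second argument  *)
(* of W is an option 'I_n, with None playing the role of 0.                  *)

Inductive gact (Sigma : Type) (n : nat) : Type :=
| lamU | lamV | lamD | lamI | lamS | lamZ
| actN of 'I_n
| actS of Sigma
| gtau.

Inductive gconst (Sigma : Type) (n : nat) : Type :=
| cX | cY | cZ | cI | cS | cC | cC' | cD | cG | cG' | cGu | cGv | cGv'
| cU of 'I_n
| cV of 'I_n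
| cW of seq Sigma & option 'I_n.

Arguments lamU {Sigma n}. Arguments lamV {Sigma n}. Arguments lamD {Sigma n}.
Arguments lamI {Sigma n}. Arguments lamS {Sigma n}. Arguments lamZ {Sigma n}.
Arguments actN {Sigma n}. Arguments actS {Sigma n}. Arguments gtau {Sigma n}.
Arguments cX {Sigma n}. Arguments cY {Sigma n}. Arguments cZ {Sigma n}.
Arguments cI {Sigma n}. Arguments cS {Sigma n}. Arguments cC {Sigma n}.
Arguments cC' {Sigma n}. Arguments cD {Sigma n}. Arguments cG {Sigma n}.
Arguments cG' {Sigma n}. Arguments cGu {Sigma n}. Arguments cGv {Sigma n}.
Arguments cGv' {Sigma n}. Arguments cU {Sigma n}. Arguments cV {Sigma n}.
Arguments cW {Sigma n}.

Section GAlgebra.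
Variables (Sigma : finType) (n : nat) (u v : 'I_n -> seq Sigma).

Local Notation P := (proc (gconst Sigma n)).
Local Notation K c := (Cst c).

Definition validW (w : seq Sigma) (k : option 'I_n) : Prop :=
  match k with
  | Some k => suffix w (u k) || suffix w (v k)
  | None => exists k, suffix w (u k) || suffix w (v k)
  end.

Inductive G_rules : gconst Sigma n -> gact Sigma n -> P -> Prop :=
| r_X_U : G_rules cX lamU (Par (K cD) (K cGv))
| r_X_t : G_rules cX gtau (K cD)
| r_Y_t : G_rules cY gtau (K cD)
| r_D_t : G_rules cD gtau (Par (K cD) (K cGu))
| r_D_D : G_rules cD lamD (K cC)
| r_Gu_t k : G_rules cGu gtau (Seq (K cGu) (K (cU k)))
| r_Gu_U k : G_rules cGu lamU (Seq (K cGv) (K (cU k)))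
| r_Gu_t' : G_rules cGu gtau (K cGv')
| r_Gv'_t k : G_rules cGv' gtau (Seq (K cGv') (K (cV k)))
| r_Gv'_Z : G_rules cGv' gtau (K cZ)
| r_Gv_t k : G_rules cGv gtau (Seq (K cGv) (K (cV k)))
| r_Gv_e : G_rules cGv gtau Eps
| r_Gv_V : G_rules cGv lamV (K cZ)
| r_Z_t : G_rules cZ gtau Eps
| r_Z_Z : G_rules cZ lamZ Eps
| r_C_I : G_rules cC lamI (K cI)
| r_C_S : G_rules cC lamS (K cS)
| r_C_G : G_rules cC gtau (Par (K cC) (K cG))
| r_C_Gv : G_rules cC gtau (Par (K cC) (K cGv))
| r_G_U k : G_rules cG gtau (Seq (K cG) (K (cU k)))
| r_G_V k : G_rules cG gtau (Seq (K cG) (K (cV k)))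
| r_G_e : G_rules cG gtau Eps
| r_I_I : G_rules cI lamI (K cC')
| r_I_k k : G_rules cI (actN k) (K cI)
| r_S_S : G_rules cS lamS (K cC')
| r_S_a a : G_rules cS (actS a) (K cS)
| r_C'_t : G_rules cC' gtau (Par (K cC') (K cG'))
| r_C'_e : G_rules cC' gtau Eps
| r_G'_U k : G_rules cG' gtau (Seq (K cG') (K (cU k)))
| r_G'_V k : G_rules cG' gtau (Seq (K cG') (K (cV k)))
| r_G'_W w k : validW w k -> G_rules cG' gtau (Seq (K cG') (K (cW w k)))
| r_G'_Gv : G_rules cG' gtau (K cGv)
| r_G'_Z : G_rules cG' gtau (K cZ)
| r_U k : G_rules (cU k) gtau (K (cW (u k) (Some k)))
| r_V k : G_rules (cV k) gtau (K (cW (v k) (Some k)))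
| r_W_a a w k : validW (a :: w) k ->
    G_rules (cW (a :: w) k) (actS a) (K (cW w k))
| r_W_k w k : validW w (Some k) ->
    G_rules (cW w (Some k)) (actN k) (K (cW w None))
| r_W_at a w k : validW (a :: w) k ->
    G_rules (cW (a :: w) k) gtau (K (cW w k))
| r_W_kt w k : validW w (Some k) ->
    G_rules (cW w (Some k)) gtau (K (cW w None))
| r_W_e : validW [::] None -> G_rules (cW [::] None) gtau Eps.

Definition PCP_solvable : Prop :=
  exists s : seq 'I_n, 0 < size s /\ flatten (map u s) = flatten (map v s).

End GAlgebra.

(* Main.v *)
Require Import Defs.
From mathcomp Require Import all_boot.
From Stdlib Require Import Relations Permutation.

Module Infra.
Set Implicit Arguments.
Unset Strict Implicit.

Section Generic.
Variables (C A : Type) (Delta : C -> A -> proc C -> Prop) (tau : A).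

Notation pc := (@pcong C).

Fixpoint isEps (p : proc C) : Prop :=
  match p with
  | Eps => True
  | Cst _ => False
  | Seq a b => isEps a /\ isEps b
  | Par a b => isEps a /\ isEps b
  end.

Fixpoint sem (p : proc C) (l : A) (r : proc C) : Prop :=
  match p with
  | Eps => False
  | Cst c => exists p', Delta c l p' /\ pc p' r
  | Seq p1 p2 => (exists p1', sem p1 l p1' /\ pc (Seq p1' p2) r)
                 \/ (isEps p1 /\ sem p2 l r)
  | Par p1 p2 => (exists p1', sem p1 l p1' /\ pc (Par p1' p2) r)
                 \/ (exists p2', sem p2 l p2' /\ pc (Par p1 p2') r)
  end.

Hint Constructors pcong : core.

Lemma pc_tr p q r : pc p q -> pc q r -> pc p r.
Proof. eauto. Qed.

Lemma sem_pc_r p l r r' : sem p l r -> pc r r' -> sem p l r'.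
Proof.
elim: p l r r' => [|c|p1 IH1 p2 IH2|p1 IH1 p2 IH2] l r r' /=.
- by [].
- by case=> p' [H1 H2] H; exists p'; split; eauto.
- case=> [[p1' [H1 H2]]|[H1 H2]] H; [left; exists p1'; split; eauto|right].
  split => //; eauto.
- case=> [[p1' [H1 H2]]|[p2' [H1 H2]]] H; [left; exists p1'|right; exists p2']; split; eauto.
Qed.

Lemma isEps_pc p q : pc p q -> (isEps p <-> isEps q).
Proof. elim => //= *; tauto. Qed.

Lemma isEps_Eps p : isEps p -> pc p Eps.
Proof.
elim: p => //= [p1 IH1 p2 IH2 [H1 H2]|p1 IH1 p2 IH2 [H1 H2]].
- apply: pc_tr (pc_seq (IH1 H1) (IH2 H2)) _; exact: pc_seq_epsl.
- apply: pc_tr (pc_par (IH1 H1) (IH2 H2)) _; exact: pc_par_epsl.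
Qed.

Lemma sem_isEps p l r : isEps p -> sem p l r -> False.
Proof.
elim: p l r => //= [p1 IH1 p2 IH2|p1 IH1 p2 IH2] l r [H1 H2].
- by case=> [[x [Hx _]]|[_ Hx]]; eauto.
- by case=> [[x [Hx _]]|[x [Hx _]]]; eauto.
Qed.

Lemma sem_pc p q : pc p q -> forall l r, sem p l r <-> sem q l r.
Proof.
elim => {p q}.
- by [].
- by move=> p q _ IH l r; split => H; apply/IH.
- by move=> p q r _ IH1 _ IH2 l x; split => H; [apply/IH2/IH1|apply/IH1/IH2].
- move=> p p' q q' Hp IHp Hq IHq l r /=; split.
  + case=> [[p1 [H1 H2]]|[H1 H2]].
    * left; exists p1; split; first exact/IHp.
      apply: pc_tr H2; apply: pc_seq => //; exact: pc_sym.
    * right; split; [move: (isEps_pc Hp); tauto|exact/IHq].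
  + case=> [[p1 [H1 H2]]|[H1 H2]].
    * left; exists p1; split; first exact/IHp.
      apply: pc_tr H2; exact: pc_seq.
    * right; split; [move: (isEps_pc Hp); tauto|exact/IHq].
- move=> p p' q q' Hp IHp Hq IHq l r /=; split.
  + case=> [[p1 [H1 H2]]|[p1 [H1 H2]]].
    * left; exists p1; split; first exact/IHp.
      apply: pc_tr H2; apply: pc_par => //; exact: pc_sym.
    * right; exists p1; split; first exact/IHq.
      apply: pc_tr H2; apply: pc_par => //; exact: pc_sym.
  + case=> [[p1 [H1 H2]]|[p1 [H1 H2]]].
    * left; exists p1; split; first exact/IHp.
      apply: pc_tr H2; exact: pc_par.
    * right; exists p1; split; first exact/IHq.
      apply: pc_tr H2; exact: pc_par.
- move=> p q r l x /=; split.
  + case=> [[y [[[p1 [H1 H2]]|[H1 H2]] H3]]|[[E1 E2] H]].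
    * left; exists p1; split => //.
      apply: pc_tr H3; apply: pc_tr (pc_sym (pc_seqA _ _ _)) _; exact: pc_seq.
    * right; split => //; left; exists y; split => //.
    * right; split => //; right; split => //.
  + case=> [[p1 [H1 H2]]|[E1 [[y [H1 H2]]|[E2 H]]]].
    * left; exists (Seq p1 q); split; first by left; exists p1.
      apply: pc_tr H2; exact: pc_seqA.
    * left; exists y; split => //; right; split => //.
    * right; split => //.
- move=> p q r l x /=; split.
  + case=> [[y [[[p1 [H1 H2]]|[p1 [H1 H2]]] H3]]|[p1 [H1 H2]]].
    * left; exists p1; split => //.
      apply: pc_tr H3; apply: pc_tr (pc_sym (pc_parA _ _ _)) _; exact: pc_par.
    * right; exists (Par p1 r); split; first by left; exists p1.
      apply: pc_tr H3; apply: pc_tr (pc_sym (pc_parA _ _ _)) _; exact: pc_par.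
    * right; exists (Par q p1); split; first by right; exists p1.
      apply: pc_tr H2; exact: pc_sym (pc_parA _ _ _).
  + case=> [[p1 [H1 H2]]|[y [[[p1 [H1 H2]]|[p1 [H1 H2]]] H3]]].
    * left; exists (Par p1 q); split; first by left; exists p1.
      apply: pc_tr H2; exact: pc_parA.
    * left; exists (Par p p1); split; first by right; exists p1.
      apply: pc_tr H3; apply: pc_tr (pc_parA _ _ _) _; exact: pc_par.
    * right; exists p1; split => //.
      apply: pc_tr H3; apply: pc_tr (pc_parA _ _ _) _; exact: pc_par.
- move=> p q l r /=; split.
  + case=> [[p1 [H1 H2]]|[p1 [H1 H2]]].
    * right; exists p1; split => //; apply: pc_tr H2; exact: pc_parC.
    * left; exists p1; split => //; apply: pc_tr H2; exact: pc_parC.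
  + case=> [[p1 [H1 H2]]|[p1 [H1 H2]]].
    * right; exists p1; split => //; apply: pc_tr H2; exact: pc_parC.
    * left; exists p1; split => //; apply: pc_tr H2; exact: pc_parC.
- move=> p l r /=; split.
  + by case=> [[p1 [H1 H2]]|[_ H]].
  + by move=> H; right.
- move=> p l r /=; split.
  + case=> [[p1 [H1 H2]]|[_ H]] //.
    apply: sem_pc_r H1 _; apply: pc_tr H2; exact: pc_sym (pc_seq_epsr _).
  + move=> H; left; exists r; split => //; exact: pc_seq_epsr.
- move=> p l r /=; split.
  + case=> [[p1 [H1 H2]]|[p1 [H1 H2]]] //.
    apply: sem_pc_r H1 _; apply: pc_tr H2; exact: pc_sym (pc_par_epsl _).
  + move=> H; right; exists r; split => //; exact: pc_par_epsl.
Qed.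


Lemma sstep_sem p l q : sstep Delta p l q -> sem p l q.
Proof.
elim => {p l q} /=.
- move=> c l p H; exists p; split; auto.
- move=> p l p' q _ H; left; exists p'; split; auto.
- move=> p l p' q _ H; left; exists p'; split; auto.
- move=> p l p' q _ H; right; exists p'; split; auto.
Qed.

Lemma sem_step p l r : sem p l r -> step Delta p l r.
Proof.
elim: p l r => [|c|p1 IH1 p2 IH2|p1 IH1 p2 IH2] l r /=.
- by [].
- case=> p' [H1 H2]; exists (Cst c), p'; split; [auto|split => //]; exact: ss_rule.
- case=> [[p1' [H1 H2]]|[H1 H2]].
  + case: (IH1 _ _ H1) => Q [Q' [HQ [HS HQ']]].
    exists (Seq Q p2), (Seq Q' p2); split; [auto|split; [exact: ss_seq|]].
    apply: pc_tr H2; auto.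
  + case: (IH2 _ _ H2) => Q [Q' [HQ [HS HQ']]].
    exists Q, Q'; split => //; apply: pc_tr HQ.
    apply: pc_tr (pc_seq (isEps_Eps H1) (pc_refl p2)) _; exact: pc_seq_epsl.
- case=> [[p1' [H1 H2]]|[p2' [H1 H2]]].
  + case: (IH1 _ _ H1) => Q [Q' [HQ [HS HQ']]].
    exists (Par Q p2), (Par Q' p2); split; [auto|split; [exact: ss_parl|]].
    apply: pc_tr H2; auto.
  + case: (IH2 _ _ H1) => Q [Q' [HQ [HS HQ']]].
    exists (Par p1 Q), (Par p1 Q'); split; [auto|split; [exact: ss_parr|]].
    apply: pc_tr H2; auto.
Qed.

Lemma step_sem p l r : step Delta p l r -> sem p l r.
Proof.
case=> Q [Q' [H1 [H2 H3]]].
apply/(sem_pc H1); apply: sem_pc_r H3; exact: sstep_sem.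
Qed.

Lemma step_pc p p' l q q' : pc p p' -> pc q q' -> step Delta p l q -> step Delta p' l q'.
Proof.
move=> Hp Hq /step_sem H; apply: sem_step; apply/(sem_pc (pc_sym Hp)).
exact: sem_pc_r H Hq.
Qed.

Definition ts := tau_steps Delta tau.
Definition wts p q := exists q1, ts p q1 /\ pc q1 q.

Lemma ts_pc_l p q p' : ts p q -> pc p p' -> exists q', ts p' q' /\ pc q q'.
Proof.
move=> /clos_rt_rt1n_iff H; case: H => [|y z Hy Hz] Hp.
- exists p'; split => //; exact: rt_refl.
- exists z; split => //.
  apply: rt_trans (rt_step _ _ _ _ (step_pc Hp (pc_refl y) Hy)) _.
  exact/clos_rt_rt1n_iff.
Qed.

Lemma wts_pc p p' q q' : pc p p' -> pc q q' -> wts p q -> wts p' q'.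
Proof.
move=> Hp Hq [q1 [H1 H2]].
case: (ts_pc_l H1 Hp) => q2 [H3 H4]; exists q2; split => //.
apply: pc_tr Hq; apply: pc_tr H2; exact: pc_sym.
Qed.

Lemma wts_refl p q : pc p q -> wts p q.
Proof. by move=> H; exists p; split => //; exact: rt_refl. Qed.

Lemma wts_trans p q r : wts p q -> wts q r -> wts p r.
Proof.
move=> [q1 [H1 H2]] [r1 [H3 H4]].
case: (ts_pc_l H3 (pc_sym H2)) => r2 [H5 H6].
exists r2; split; first exact: rt_trans H1 H5.
apply: pc_tr H4; exact: pc_sym.
Qed.

Lemma wts_sem p q : sem p tau q -> wts p q.
Proof. move=> H; exists q; split; auto; apply: rt_step; exact: sem_step. Qed.

Lemma ts_ctx (f : proc C -> proc C) :
  (forall p q, sem p tau q -> sem (f p) tau (f q)) ->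
  forall p q, ts p q -> ts (f p) (f q).
Proof.
move=> Hf p q; elim => {p q}.
- move=> x y H; apply: rt_step; apply: sem_step; apply: Hf; exact: step_sem.
- move=> x; exact: rt_refl.
- move=> x y z _ H1 _ H2; exact: rt_trans H1 H2.
Qed.

Lemma wts_ctx (f : proc C -> proc C) :
  (forall p q, sem p tau q -> sem (f p) tau (f q)) ->
  (forall p q, pc p q -> pc (f p) (f q)) ->
  forall p q, wts p q -> wts (f p) (f q).
Proof.
move=> Hf Hg p q [q1 [H1 H2]]; exists (f q1); split; last exact: Hg.
exact: ts_ctx.
Qed.

Lemma wts_parl p q r : wts p q -> wts (Par p r) (Par q r).
Proof.
apply: (wts_ctx (f := fun x => Par x r)) => x y H /=; last by auto.
left; exists y; split; auto.
Qed.

Lemma wts_parr p q r : wts p q -> wts (Par r p) (Par r q).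
Proof.
apply: (wts_ctx (f := fun x => Par r x)) => x y H /=; last by auto.
right; exists y; split; auto.
Qed.

Lemma wts_seq p q r : wts p q -> wts (Seq p r) (Seq q r).
Proof.
apply: (wts_ctx (f := fun x => Seq x r)) => x y H /=; last by auto.
left; exists y; split; auto.
Qed.

Lemma sem_parl p l q r : sem p l q -> sem (Par p r) l (Par q r).
Proof. by move=> H; left; exists q; split. Qed.
Lemma sem_parr p l q r : sem p l q -> sem (Par r p) l (Par r q).
Proof. by move=> H; right; exists q; split. Qed.
Lemma sem_seq p l q r : sem p l q -> sem (Seq p r) l (Seq q r).
Proof. by move=> H; left; exists q; split. Qed.


Definition transfer (B : proc C -> proc C -> Prop) P Q :=
  forall l P', step Delta P l P' ->
   (exists Q'' Q', tau_steps Delta tau Q Q'' /\ step Delta Q'' l Q'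
                   /\ B P Q'' /\ B P' Q') \/ (l = tau /\ B P' Q).

Lemma bb_of_transfer B :
  (forall P Q, B P Q -> B Q P) -> (forall P Q, B P Q -> transfer B P Q) ->
  branching_bisimulation Delta tau B.
Proof.
move=> Hs Ht; split; first by move=> P Q l P' HB HP; apply: (Ht _ _ HB).
move=> P Q l Q' HB HQ; case: (Ht _ _ (Hs _ _ HB) _ _ HQ).
- move=> [Q'' [Q1 [H1 [H2 [H3 H4]]]]]; left; exists Q'', Q1; split => //; split => //.
  by split; apply: Hs.
- by move=> [H1 H2]; right; split => //; apply: Hs.
Qed.

Lemma transfer_weak (B : proc C -> proc C -> Prop) P Q l P' :
  (forall P Q Q', B P Q -> pc Q Q' -> B P Q') ->
  (exists Q2 Q', wts Q Q2 /\ sem Q2 l Q' /\ B P Q2 /\ B P' Q') ->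
  (exists Q'' Q', tau_steps Delta tau Q Q'' /\ step Delta Q'' l Q'
                   /\ B P Q'' /\ B P' Q').
Proof.
move=> Hc [Q2 [Q' [[Q1 [H1 H2]] [H3 [H4 H5]]]]].
exists Q1, Q'; split => //; split; last split => //.
- apply: step_pc (pc_sym H2) (pc_refl _) _; exact: sem_step.
- by apply: Hc H4 _; apply: pc_sym.
Qed.

Fixpoint parl (l : list (proc C)) : proc C :=
  match l with [::] => Eps | t :: l => Par t (parl l) end.

Lemma parl_cat l1 l2 : pc (parl (l1 ++ l2)) (Par (parl l1) (parl l2)).
Proof.
elim: l1 => /= [|t l1 IH]; first exact: pc_sym (pc_par_epsl _).
apply: pc_tr (pc_par (pc_refl t) IH) _; exact: pc_sym (pc_parA _ _ _).
Qed.

Lemma parl_mid l1 t l2 : pc (parl (l1 ++ t :: l2)) (Par t (parl (l1 ++ l2))).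
Proof.
elim: l1 => /= [|x l1 IH]; first by auto.
apply: pc_tr (pc_par (pc_refl x) IH) _.
apply: pc_tr (pc_sym (pc_parA _ _ _)) _.
apply: pc_tr (pc_par (pc_parC _ _) (pc_refl _)) _; exact: pc_parA.
Qed.

Lemma sem_parl_inv l x r : sem (parl l) x r ->
  exists l1 t l2 t', l = l1 ++ t :: l2 /\ sem t x t' /\ pc r (parl (l1 ++ t' :: l2)).
Proof.
elim: l r => /= [|t l IH] r //.
case=> [[t' [H1 H2]]|[p2 [H1 H2]]].
- exists [::], t, l, t'; split => //; split => //; exact: pc_sym.
- case: (IH _ H1) => l1 [t0 [l2 [t' [E [H3 H4]]]]].
  exists (t :: l1), t0, l2, t'; rewrite E; split => //; split => //=.
  apply: pc_tr (pc_sym H2) _; auto.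
Qed.

Lemma sem_parl_intro l1 t l2 x t' : sem t x t' ->
  sem (parl (l1 ++ t :: l2)) x (parl (l1 ++ t' :: l2)).
Proof.
elim: l1 => /= [|y l1 IH] H; first by left; exists t'; split.
by right; exists (parl (l1 ++ t' :: l2)); split; auto.
Qed.

Lemma wts_parl_mid l1 t l2 t' : wts t t' ->
  wts (parl (l1 ++ t :: l2)) (parl (l1 ++ t' :: l2)).
Proof.
move=> H; apply: wts_pc (pc_sym (parl_mid _ _ _)) (pc_sym (parl_mid _ _ _)) _.
exact: wts_parl.
Qed.

End Generic.

End Infra.
Import Infra.

Set Implicit Arguments.
Unset Strict Implicit.

Section Main.
Variables (Sigma : finType) (n : nat) (u v : 'I_n -> seq Sigma).

Notation C := (gconst Sigma n).
Notation Ac := (gact Sigma n).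
Notation P := (proc C).
Notation Delta := (G_rules u v).
Notation tau := (@gtau Sigma n).
Notation pc := (@pcong C).
Notation sem := (sem Delta).
Notation wts := (wts Delta tau).

Hint Constructors pcong : core.

Ltac closepc := first [assumption | apply: pc_refl].

Lemma wrefl (p q : P) : pc p q -> wts p q.
Proof. exact: wts_refl. Qed.

Fixpoint wordp (w : seq C) : P :=
  match w with [::] => Eps | c :: w => Seq (Cst c) (wordp w) end.

Lemma wordp_cat w1 w2 : pc (Seq (wordp w1) (wordp w2)) (wordp (w1 ++ w2)).
Proof.
elim: w1 => /= [|c w1 IH]; first exact: pc_seq_epsl.
apply: pc_tr (pc_seqA _ _ _) _; auto.
Qed.

Lemma sem_wordp c w l r :
  sem (wordp (c :: w)) l r <-> exists p, Delta c l p /\ pc r (Seq p (wordp w)).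
Proof.
split => /=.
- case=> [[p1 [[p' [H1 H2]] H3]]|[[] _]].
  exists p'; split => //; apply: pc_tr (pc_sym H3) _; apply: pc_seq => //; exact: pc_sym.
- case=> p [H1 H2]; left; exists p; split; first by exists p.
  exact: pc_sym.
Qed.

Lemma hstep c l p ws w : Delta c l p -> pc p (wordp ws) ->
  sem (wordp (c :: w)) l (wordp (ws ++ w)).
Proof.
move=> H1 H2; apply/sem_wordp; exists p; split => //.
apply: pc_tr (pc_sym (wordp_cat _ _)) _; apply: pc_seq => //; exact: pc_sym.
Qed.

Lemma pc_w0 : pc Eps (wordp [::]). Proof. by []. Qed.
Lemma pc_w1 c : pc (Cst c) (wordp [:: c]). Proof. exact: pc_sym (pc_seq_epsr _). Qed.
Lemma pc_w2 c d : pc (Seq (Cst c) (Cst d)) (wordp [:: c; d]).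
Proof. apply: pc_seq => //; exact: pc_w1. Qed.

Lemma hstep0 c l w : Delta c l Eps -> sem (wordp (c :: w)) l (wordp w).
Proof. move=> H; exact: (hstep (ws := [::]) w H pc_w0). Qed.
Lemma hstep1 c d l w : Delta c l (Cst d) -> sem (wordp (c :: w)) l (wordp (d :: w)).
Proof. move=> H; exact: (hstep (ws := [:: d]) w H (pc_w1 d)). Qed.
Lemma hstep2 c d e l w : Delta c l (Seq (Cst d) (Cst e)) ->
  sem (wordp (c :: w)) l (wordp (d :: e :: w)).
Proof. move=> H; exact: (hstep (ws := [:: d; e]) w H (pc_w2 d e)). Qed.

Definition vconst (c : C) : Prop :=
  match c with
  | cX | cY | cD | cC | cI | cS | cC' => False
  | cW w k => validW u v w k
  | _ => True
  end.

Fixpoint vcf (p : P) : Prop :=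
  match p with
  | Eps => True
  | Cst c => vconst c
  | Seq a b => vcf a /\ vcf b
  | Par a b => vcf a /\ vcf b
  end.

Lemma vcf_pc p q : pc p q -> (vcf p <-> vcf q).
Proof. elim => //= *; tauto. Qed.

Lemma validW_cons a w k : validW u v (a :: w) k -> validW u v w k.
Proof.
case: k => [k|] /=.
- by case/orP => H; apply/orP; [left|right]; apply: suffix_trans H; exact: suffix_cons.
- case=> k /orP H; exists k; apply/orP.
  by case: H => H; [left|right]; apply: suffix_trans H; exact: suffix_cons.
Qed.

Lemma validW_None w k : validW u v w (Some k) -> validW u v w None.
Proof. by move=> H; exists k. Qed.

Lemma rule_vcf c l p : Delta c l p -> vconst c -> vcf p.
Proof.
case=> /= *; try done; try (apply: validW_cons; eassumption);
  try (apply: validW_None; eassumption).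
- by apply/orP; left; exact: suffix_refl.
- by apply/orP; right; exact: suffix_refl.
Qed.

Lemma sem_vcf p l r : sem p l r -> vcf p -> vcf r.
Proof.
elim: p l r => [|c|p1 IH1 p2 IH2|p1 IH1 p2 IH2] l r //=.
- case=> p' [H1 H2] Hc; apply/(vcf_pc H2); exact: rule_vcf H1 Hc.
- case=> [[p1' [H1 H2]]|[_ H]] [V1 V2].
  + apply/(vcf_pc H2) => /=; split => //; exact: IH1 H1 V1.
  + exact: IH2 H V2.
- case=> [[p1' [H1 H2]]|[p2' [H1 H2]]] [V1 V2]; apply/(vcf_pc H2) => /=.
  + split => //; exact: IH1 H1 V1.
  + split => //; exact: IH2 H1 V2.
Qed.

Lemma ts_vcf p q : ts Delta tau p q -> vcf p -> vcf q.
Proof.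
elim => {p q}.
- by move=> x y Hs V; exact: sem_vcf (step_sem Hs) V.
- by [].
- by move=> x y z _ IH1 _ IH2 V; apply: IH2; apply: IH1.
Qed.

Lemma wts_vcf p q : wts p q -> vcf p -> vcf q.
Proof.
case=> q1 [H1 H2] V; apply/(vcf_pc H2); exact: ts_vcf H1 V.
Qed.

Lemma wts_seq_eps p q : wts p Eps -> wts (Seq p q) q.
Proof.
move=> H; apply: wts_trans (wts_seq q H) _; apply: wts_refl; exact: pc_seq_epsl.
Qed.

Lemma wts_sem1 p q : sem p tau q -> wts p q.
Proof. exact: Infra.wts_sem. Qed.

Lemma cst_eps c p : Delta c tau p -> wts p Eps -> wts (Cst c) Eps.
Proof.
move=> H1 H2; apply: wts_trans H2; apply: wts_sem1 => /=; exists p; split => //.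
Qed.

Lemma W_dies w k : validW u v w k -> wts (Cst (cW w k)) Eps.
Proof.
elim: w k => [|a w IH] k Hv.
- case: k Hv => [k|] Hv.
  + apply: (@cst_eps _ (Cst (cW [::] None))); first exact: r_W_kt.
    apply: (@cst_eps _ Eps); [apply: r_W_e; exact: validW_None Hv|exact: wts_refl].
  + apply: (@cst_eps _ Eps); [exact: r_W_e|exact: wts_refl].
- apply: (@cst_eps _ (Cst (cW w k))); first exact: r_W_at.
  apply: IH; exact: validW_cons Hv.
Qed.

Lemma U_dies k : wts (Cst (cU k)) Eps.
Proof.
apply: (@cst_eps _ (Cst (cW (u k) (Some k)))); first exact: r_U.
apply: W_dies => /=; apply/orP; left; exact: suffix_refl.
Qed.

Lemma V_dies k : wts (Cst (cV k)) Eps.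
Proof.
apply: (@cst_eps _ (Cst (cW (v k) (Some k)))); first exact: r_V.
apply: W_dies => /=; apply/orP; right; exact: suffix_refl.
Qed.

Lemma Z_dies : wts (Cst cZ) Eps.
Proof. apply: (@cst_eps _ Eps); [exact: r_Z_t|exact: wts_refl]. Qed.

Lemma const_dies c : vconst c -> wts (Cst c) Eps.
Proof.
case: c => /= [|||||||||||||k|k|w k] Hv //.
- exact: Z_dies.
- apply: (@cst_eps _ Eps); [exact: r_G_e|exact: wts_refl].
- apply: (@cst_eps _ (Cst cZ)); [exact: r_G'_Z|exact: Z_dies].
- apply: (@cst_eps _ (Cst cGv')); first exact: r_Gu_t'.
  apply: (@cst_eps _ (Cst cZ)); [exact: r_Gv'_Z|exact: Z_dies].
- apply: (@cst_eps _ Eps); [exact: r_Gv_e|exact: wts_refl].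
- apply: (@cst_eps _ (Cst cZ)); [exact: r_Gv'_Z|exact: Z_dies].
- exact: U_dies.
- exact: V_dies.
- exact: W_dies.
Qed.

Lemma vcf_dies p : vcf p -> wts p Eps.
Proof.
elim: p => [|c|p1 IH1 p2 IH2|p1 IH1 p2 IH2] /=.
- move=> _; exact: wts_refl.
- exact: const_dies.
- case=> V1 V2; apply: wts_trans (wts_seq_eps _ (IH1 V1)) (IH2 V2).
- case=> V1 V2; apply: wts_trans (wts_parl _ (IH1 V1)) _.
  apply: wts_trans (wts_parr _ (IH2 V2)) _; apply: wts_refl; exact: pc_par_epsl.
Qed.


Lemma pc_seq0 w : pc (Seq Eps (wordp w)) (wordp w). Proof. exact: pc_seq_epsl. Qed.
Lemma pc_seq2 c d w : pc (Seq (Seq (Cst c) (Cst d)) (wordp w)) (wordp (c :: d :: w)).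
Proof. exact: pc_seqA. Qed.

Lemma Gv_inv w l r : sem (wordp (cGv :: w)) l r ->
  (l = tau /\ exists k, pc r (wordp (cGv :: cV k :: w))) \/ (l = tau /\ pc r (wordp w))
  \/ (l = lamV /\ pc r (wordp (cZ :: w))).
Proof.
move/sem_wordp => [p [H1 H2]]; inversion H1; subst.
- left; split => //; exists k; apply: pc_tr H2 _; exact: pc_seq2.
- right; left; split => //; apply: pc_tr H2 _; exact: pc_seq0.
- by right; right; split.
Qed.

Lemma Z_inv w l r : sem (wordp (cZ :: w)) l r -> (l = tau \/ l = lamZ) /\ pc r (wordp w).
Proof.
move/sem_wordp => [p [H1 H2]]; inversion H1; subst.
- split; [by left|apply: pc_tr H2 _; exact: pc_seq0].
- split; [by right|apply: pc_tr H2 _; exact: pc_seq0].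
Qed.

Definition plainc (c : C) : Prop :=
  match c with cU _ | cV _ => True | cW w k => validW u v w k | _ => False end.
Fixpoint allP (Pc : C -> Prop) (w : seq C) : Prop :=
  match w with [::] => True | c :: w => Pc c /\ allP Pc w end.
Definition plainw := allP plainc.

Lemma allP_cat Pc w1 w2 : allP Pc (w1 ++ w2) <-> allP Pc w1 /\ allP Pc w2.
Proof. elim: w1 => /= [|c w1 IH]; tauto. Qed.

Definition Lc1 (c : C) : seq Sigma :=
  match c with cU k => u k | cV k => v k | cW w _ => w | _ => [::] end.
Definition Kc1 (c : C) : seq 'I_n :=
  match c with cU k | cV k | cW _ (Some k) => [:: k] | _ => [::] end.
Definition Lc (w : seq C) := flatten (map Lc1 w).
Definition Kc (w : seq C) := flatten (map Kc1 w).

Lemma Lc_cons c w : Lc (c :: w) = Lc1 c ++ Lc w. Proof. by []. Qed.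
Lemma Kc_cons c w : Kc (c :: w) = Kc1 c ++ Kc w. Proof. by []. Qed.

Lemma plain_vcf w : plainw w -> vcf (wordp w).
Proof. elim: w => //= c w IH [Hc Hw]; split; [by case: c Hc|exact: IH]. Qed.

Lemma plain_step w l r : plainw w -> sem (wordp w) l r ->
  exists w2, pc r (wordp w2) /\ plainw w2 /\
  ((Lc w2 = Lc w /\ (l = tau \/ exists k, l = actN k))
     \/ (exists a, Lc w = a :: Lc w2 /\ (l = tau \/ l = actS a))) /\
  ((Kc w2 = Kc w /\ (l = tau \/ exists a, l = actS a))
     \/ (exists k, Kc w = k :: Kc w2 /\ (l = tau \/ l = actN k))).
Proof.
case: w => [|c w] //= [Hc Hw] /sem_wordp [p [H1 H2]].
case: c Hc H1 => //= [k|k|w0 k0] Hc H1; inversion H1; subst.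
- exists (cW (u k) (Some k) :: w); split; first by apply: pc_tr H2 _.
  split; first by split => //=; apply/orP; left; exact: suffix_refl.
  by split; left; split => //; left.
- exists (cW (v k) (Some k) :: w); split; first by apply: pc_tr H2 _.
  split; first by split => //=; apply/orP; right; exact: suffix_refl.
  by split; left; split => //; left.
- exists (cW w1 k0 :: w); split; first by apply: pc_tr H2 _.
  split; first by split => //; exact: validW_cons Hc.
  split; first by right; exists a; split => //; right.
  left; split; [by destruct k0|right; by exists a].
- exists (cW w0 None :: w); split; first by apply: pc_tr H2 _.
  split; first by split => //; exact: validW_None Hc.
  split; first by left; split => //; right; exists k.
  by right; exists k; split => //; right.
- exists (cW w1 k0 :: w); split; first by apply: pc_tr H2 _.
  split; first by split => //; exact: validW_cons Hc.
  split; first by right; exists a; split => //; left.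
  left; split; [by destruct k0|by left].
- exists (cW w0 None :: w); split; first by apply: pc_tr H2 _.
  split; first by split => //; exact: validW_None Hc.
  split; first by left; split => //; left.
  by right; exists k; split => //; left.
- exists w; split; first by apply: pc_tr H2 _; exact: pc_seq0.
  split => //; split; by left; split => //; left.
Qed.


Lemma wts_head c w : wts (Cst c) Eps -> wts (wordp (c :: w)) (wordp w).
Proof. move=> H /=; exact: wts_seq_eps H. Qed.

Lemma Lmatch (Hu : forall k, u k != [::]) (Hv : forall k, v k != [::]) w a rho x :
  plainw w -> Lc w = a :: rho -> (x = tau \/ x = actS a) ->
  exists w1 w2, wts (wordp w) (wordp w1) /\ sem (wordp w1) x (wordp w2) /\
    plainw w1 /\ plainw w2 /\ Lc w1 = Lc w /\ Lc w2 = rho.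
Proof.
move=> + + Hx; elim: w => [|c w IH] //= [Hc Hw].
case: c Hc => //= [k|k|w0 k0] Hc.
- case E: (u k) (Hu k) => [|b beta] // _; rewrite Lc_cons /= E /= => [[Ea Erho]]; subst a rho.
  have Hv0 : validW u v (b :: beta) (Some k) by apply/orP; left; rewrite -E suffix_refl.
  exists (cW (u k) (Some k) :: w), (cW beta (Some k) :: w); split.
  + apply: wts_sem1; apply: hstep1; exact: r_U.
  split; first by rewrite E; case: Hx => ->; apply: hstep1;
     [exact: r_W_at|exact: r_W_a].
  split; first by split => //; rewrite E.
  split; first by split => //; exact: validW_cons Hv0.
  by rewrite /Lc /= E.
- case E: (v k) (Hv k) => [|b beta] // _; rewrite Lc_cons /= E /= => [[Ea Erho]]; subst a rho.
  have Hv0 : validW u v (b :: beta) (Some k) by apply/orP; right; rewrite -E suffix_refl.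
  exists (cW (v k) (Some k) :: w), (cW beta (Some k) :: w); split.
  + apply: wts_sem1; apply: hstep1; exact: r_V.
  split; first by rewrite E; case: Hx => ->; apply: hstep1;
     [exact: r_W_at|exact: r_W_a].
  split; first by split => //; rewrite E.
  split; first by split => //; exact: validW_cons Hv0.
  by rewrite /Lc /= E.
- case: w0 Hc => [|b beta] Hc.
  + rewrite Lc_cons /= => HL.
    case: (IH Hw HL) => w1 [w2 [H1 [H2 [H3 [H4 [H5 H6]]]]]].
    exists w1, w2; split => //.
    apply: wts_trans H1; apply: wts_head => //; exact: W_dies.
  + rewrite Lc_cons /= => [[Ea Erho]]; subst a rho.
    exists (cW (b :: beta) k0 :: w), (cW beta k0 :: w); split; first exact: wts_refl.
    split; first by case: Hx => ->; apply: hstep1; [exact: r_W_at|exact: r_W_a].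
    split => //; split; first by split => //; exact: validW_cons Hc.
    by [].
Qed.

Lemma Kmatch w k kap x :
  plainw w -> Kc w = k :: kap -> (x = tau \/ x = actN k) ->
  exists w1 w2, wts (wordp w) (wordp w1) /\ sem (wordp w1) x (wordp w2) /\
    plainw w1 /\ plainw w2 /\ Kc w1 = Kc w /\ Kc w2 = kap.
Proof.
move=> + + Hx; elim: w => [|c w IH] //= [Hc Hw].
case: c Hc => //= [j|j|w0 k0] Hc.
- rewrite Kc_cons /= => [[Ek Ekap]]; subst k kap.
  have Hv0 : validW u v (u j) (Some j) by apply/orP; left; exact: suffix_refl.
  exists (cW (u j) (Some j) :: w), (cW (u j) None :: w); split.
  + apply: wts_sem1; apply: hstep1; exact: r_U.
  split; first by case: Hx => ->; apply: hstep1; [exact: r_W_kt|exact: r_W_k].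
  split; first by split.
  by split; first by split => //; exact: validW_None Hv0.
- rewrite Kc_cons /= => [[Ek Ekap]]; subst k kap.
  have Hv0 : validW u v (v j) (Some j) by apply/orP; right; exact: suffix_refl.
  exists (cW (v j) (Some j) :: w), (cW (v j) None :: w); split.
  + apply: wts_sem1; apply: hstep1; exact: r_V.
  split; first by case: Hx => ->; apply: hstep1; [exact: r_W_kt|exact: r_W_k].
  split; first by split.
  by split; first by split => //; exact: validW_None Hv0.
- case: k0 Hc => [j|] Hc.
  + rewrite Kc_cons /= => [[Ek Ekap]]; subst k kap.
    exists (cW w0 (Some j) :: w), (cW w0 None :: w); split; first exact: wts_refl.
    split; first by case: Hx => ->; apply: hstep1; [exact: r_W_kt|exact: r_W_k].
    split => //; split; first by split => //; exact: validW_None Hc.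
    by [].
  + rewrite Kc_cons /= => HK.
    case: (IH Hw HK) => w1 [w2 [H1 [H2 [H3 [H4 [H5 H6]]]]]].
    exists w1, w2; split => //.
    apply: wts_trans H1; apply: wts_head => //; exact: W_dies.
Qed.


Lemma gen g (Pc : C -> Prop) :
  (forall c, Pc c -> Delta g tau (Seq (Cst g) (Cst c))) ->
  forall ws w, allP Pc ws -> wts (wordp (g :: w)) (wordp (g :: ws ++ w)).
Proof.
move=> Hg; elim=> [|c ws IH] w /=; first by move=> _; exact: wts_refl.
case=> Hc Hws; apply: wts_trans (IH w Hws) _; apply: wts_sem1.
exact: hstep2 (Hg c Hc).
Qed.

Lemma gen0 g (Pc : C -> Prop) :
  (forall c, Pc c -> Delta g tau (Seq (Cst g) (Cst c))) ->
  forall ws, allP Pc ws -> wts (wordp [:: g]) (wordp (g :: ws)).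
Proof. move=> Hg ws H; have := gen Hg [::] H; by rewrite cats0. Qed.

Lemma allP_map T (f : T -> C) (Pc : C -> Prop) xs :
  (forall x, Pc (f x)) -> allP Pc (map f xs).
Proof. by move=> H; elim: xs => //= x xs ->; split. Qed.

Lemma allP_impl (P1 P2 : C -> Prop) w : (forall c, P1 c -> P2 c) -> allP P1 w -> allP P2 w.
Proof. by move=> H; elim: w => //= c w IH [H1 H2]; split; auto. Qed.

Lemma spawn c g t : Delta c tau (Par (Cst c) (Cst g)) -> wts (wordp [:: g]) t ->
  wts (Cst c) (Par (Cst c) t).
Proof.
move=> H1 H2; apply: wts_trans (wts_parr _ H2).
apply: wts_sem1 => /=; exists (Par (Cst c) (Cst g)); split => //.
apply: pc_par => //; exact: pc_w1.
Qed.

Lemma ctrl_more c t t' : wts (Cst c) (Par (Cst c) t) -> wts t t' -> wts (Cst c) (Par (Cst c) t').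
Proof. move=> H1 H2; exact: wts_trans H1 (wts_parr _ H2). Qed.

Definition Uc := @cU Sigma n.
Definition Vc := @cV Sigma n.
Definition toC (x : bool * 'I_n) : C := if x.1 then cU x.2 else cV x.2.

Lemma prod_D_Gu r : wts (Cst cD) (Par (Cst cD) (wordp (cGu :: map Uc r))).
Proof.
apply: spawn; first exact: r_D_t.
apply: (gen0 (Pc := fun c => exists k, c = cU k)); first by move=> c [k ->]; exact: r_Gu_t.
by apply: allP_map => k; exists k.
Qed.

Lemma prod_D_Z t r : wts (Cst cD) (Par (Cst cD) (wordp (cZ :: map Vc t ++ map Uc r))).
Proof.
apply: ctrl_more (prod_D_Gu r) _.
apply: wts_trans (wts_sem1 (hstep1 (map Uc r) (r_Gu_t' u v))) _.
have Hg : forall c, (exists k, c = cV k) -> Delta cGv' tau (Seq (Cst cGv') (Cst c)).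
  by move=> c [k ->]; exact: r_Gv'_t.
apply: wts_trans (gen (ws := map Vc t) Hg (map Uc r) _) _.
  by apply: allP_map => k; exists k.
apply: wts_sem1; apply: hstep1; exact: r_Gv'_Z.
Qed.

Lemma prod_D_plain t r : wts (Cst cD) (Par (Cst cD) (wordp (map Vc t ++ map Uc r))).
Proof.
apply: ctrl_more (prod_D_Z t r) _; apply: wts_sem1; apply: hstep0; exact: r_Z_t.
Qed.

Lemma prod_C_Gv t : wts (Cst cC) (Par (Cst cC) (wordp (cGv :: map Vc t))).
Proof.
apply: spawn; first exact: r_C_Gv.
apply: (gen0 (Pc := fun c => exists k, c = cV k)); first by move=> c [k ->]; exact: r_Gv_t.
by apply: allP_map => k; exists k.
Qed.

Lemma prod_C_plain y : wts (Cst cC) (Par (Cst cC) (wordp (map toC y))).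
Proof.
apply: spawn; first exact: r_C_G.
have Hg : forall c, (exists x, c = toC x) -> Delta cG tau (Seq (Cst cG) (Cst c)).
  move=> c [[[] k] ->] /=; [exact: r_G_U|exact: r_G_V].
apply: wts_trans (gen0 (ws := map toC y) Hg _) _.
  by apply: allP_map => x; exists x.
apply: wts_sem1; apply: hstep0; exact: r_G_e.
Qed.

Lemma prod_C'_G' w : plainw w -> wts (Cst cC') (Par (Cst cC') (wordp (cG' :: w))).
Proof.
move=> Hw; apply: spawn; first exact: r_C'_t.
have Hg : forall c, plainc c -> Delta cG' tau (Seq (Cst cG') (Cst c)).
  by case=> //= [k|k|w0 k0] Hc; [exact: r_G'_U|exact: r_G'_V|exact: r_G'_W].
exact: (gen0 Hg Hw).
Qed.

Lemma prod_C'_Gv w : plainw w -> wts (Cst cC') (Par (Cst cC') (wordp (cGv :: w))).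
Proof.
move=> Hw; apply: ctrl_more (prod_C'_G' Hw) _; apply: wts_sem1; apply: hstep1.
exact: r_G'_Gv.
Qed.

Lemma prod_C'_Z w : plainw w -> wts (Cst cC') (Par (Cst cC') (wordp (cZ :: w))).
Proof.
move=> Hw; apply: ctrl_more (prod_C'_G' Hw) _; apply: wts_sem1; apply: hstep1.
exact: r_G'_Z.
Qed.

Lemma prod_C'_plain w : plainw w -> wts (Cst cC') (Par (Cst cC') (wordp w)).
Proof.
move=> Hw; apply: ctrl_more (prod_C'_Gv Hw) _; apply: wts_sem1; apply: hstep0.
exact: r_Gv_e.
Qed.


Notation parl := (@parl C).

Lemma perm_pc l1 l2 : Permutation l1 l2 -> pc (parl l1) (parl l2).
Proof.
elim => {l1 l2} /=.
- by [].
- by move=> x l l' _ H; apply: pc_par.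
- move=> x y l.
  apply: pc_tr (pc_sym (pc_parA _ _ _)) _.
  apply: pc_tr (pc_par (pc_parC _ _) (pc_refl _)) _; exact: pc_parA.
- move=> l l' l'' _ H1 _ H2; exact: pc_tr H1 H2.
Qed.

Lemma phase_decomp c L P0 l P' : pc P0 (Par (Cst c) (parl L)) -> step Delta P0 l P' ->
  (exists p, Delta c l p /\ pc P' (Par p (parl L))) \/
  (exists l1 t l2 t', L = l1 ++ t :: l2 /\ sem t l t' /\
      pc P' (Par (Cst c) (parl (l1 ++ t' :: l2)))).
Proof.
move=> H Hs; move: ((sem_pc Delta H l P').1 (step_sem Hs)) => /=.
case=> [[p1 [[p [H1 H2]] H3]]|[X [H1 H2]]].
- left; exists p; split => //; apply: pc_sym; apply: pc_tr _ H3; exact: pc_par.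
- case: (sem_parl_inv H1) => l1 [t [l2 [t' [E [H4 H5]]]]].
  right; exists l1, t, l2, t'; split => //; split => //.
  apply: pc_sym; apply: pc_tr _ H2; apply: pc_par => //; exact: pc_sym.
Qed.

Lemma rb_ctrl c l p L : Delta c l p -> sem (Par (Cst c) (parl L)) l (Par p (parl L)).
Proof. by move=> H; left; exists p; split => //; exists p. Qed.

Lemma rb_comp c l t t' l1 l2 : sem t l t' ->
  sem (Par (Cst c) (parl (l1 ++ t :: l2))) l (Par (Cst c) (parl (l1 ++ t' :: l2))).
Proof. move=> H; right; exists (parl (l1 ++ t' :: l2)); split; [exact: sem_parl_intro|exact: pc_refl]. Qed.

Lemma rb_wts_comp c t t' l1 l2 : wts t t' ->
  wts (Par (Cst c) (parl (l1 ++ t :: l2))) (Par (Cst c) (parl (l1 ++ t' :: l2))).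
Proof. move=> H; apply: wts_parr; exact: wts_parl_mid. Qed.

Lemma produce c S L : List.Forall (fun e => wts (Cst c) (Par (Cst c) e)) S ->
  wts (Par (Cst c) (parl L)) (Par (Cst c) (parl (S ++ L))).
Proof.
elim: S => /= [|e S IH] H; first exact: wts_refl.
inversion H; subst; apply: wts_trans (IH H3) _.
apply: wts_trans (wts_parl _ H2) _; apply: wts_refl; exact: pc_parA.
Qed.

Lemma kill c S L : List.Forall vcf S ->
  wts (Par (Cst c) (parl (S ++ L))) (Par (Cst c) (parl L)).
Proof.
elim: S => /= [|e S IH] H; first exact: wts_refl.
inversion H; subst; apply: wts_trans _ (IH H3).
apply: wts_parr; apply: wts_trans (wts_parl _ (vcf_dies H2)) _.
apply: wts_refl; exact: pc_par_epsl.
Qed.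

Lemma perm_repl (l1 l2 X1 X2 : seq P) t t' :
  Permutation (l1 ++ t :: l2) (X1 ++ t :: X2) ->
  Permutation (l1 ++ t' :: l2) (X1 ++ t' :: X2).
Proof. move=> H; apply: Permutation_elt; exact: Permutation_app_inv H. Qed.

Lemma locate (l1 l2 X : seq P) t : Permutation (l1 ++ t :: l2) X -> List.In t X.
Proof. move=> H; exact: (Permutation_in t H (List.in_elt t l1 l2)). Qed.

Lemma pc_wts P1 P2 Q1 Q2 : pc P1 P2 -> pc Q1 Q2 -> wts P2 Q2 -> wts P1 Q1.
Proof. move=> H1 H2; apply: wts_pc; [exact: pc_sym|exact: pc_sym]. Qed.


Definition DD (E : P) := wts (Cst cD) (Par (Cst cD) E) /\ vcf E.
Definition CCa (t : P) := wts (Cst cC) (Par (Cst cC) t) /\ vcf t.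
Definition SSo (t : P) := wts (Cst cC') (Par (Cst cC') t) /\ vcf t.

Definition ucat (r : seq 'I_n) := flatten (map u r).
Definition vcat (r : seq 'I_n) := flatten (map v r).

Definition Bthr (t : P) := exists x r,
  t = wordp (cGv :: map Vc x ++ map Uc r) /\ ucat r = vcat r.
Definition balC (t : P) := exists y,
  t = wordp (cGv :: map toC y) /\ Lc (map toC y) = vcat (Kc (map toC y)).
Definition absC t := CCa t \/ balC t.
Definition zpairC (t t' : P) := exists y y',
  t = wordp (cZ :: map toC y) /\ t' = wordp (cZ :: map toC y') /\
  Lc (map toC y) = Lc (map toC y') /\ Kc (map toC y) = Kc (map toC y').
Definition pairC t t' := t = t' \/ zpairC t t'.
Definition softF T (F : seq C -> seq T) (t t' : P) := exists w w',
  plainw w /\ plainw w' /\ F w = F w' /\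
  ((t = wordp w /\ t' = wordp w') \/ (t = wordp (cGv :: w) /\ t' = wordp (cGv :: w'))
   \/ (t = wordp (cZ :: w) /\ t' = wordp (cZ :: w'))).
Definition ipair T (F : seq C -> seq T) t t' := t = t' \/ softF F t t'.

Definition DrL (L1 L2 : seq P) := exists G B1 B2 E1 E2,
  Permutation L1 (G ++ B1 ++ E1) /\ Permutation L2 (G ++ B2 ++ E2) /\
  List.Forall Bthr B1 /\ List.Forall Bthr B2 /\ size B1 = size B2 /\
  List.Forall DD E1 /\ List.Forall DD E2.
Definition CrL (L1 L2 : seq P) := exists H1 H2 A1 A2,
  Permutation L1 (H1 ++ A1) /\ Permutation L2 (H2 ++ A2) /\
  List.Forall2 pairC H1 H2 /\ List.Forall absC A1 /\ List.Forall absC A2.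
Definition IrL := List.Forall2 (ipair Lc).
Definition SrL := List.Forall2 (ipair Kc).
Definition C'L (L1 L2 : seq P) := exists H S1 S2,
  Permutation L1 (H ++ S1) /\ Permutation L2 (H ++ S2) /\
  List.Forall SSo S1 /\ List.Forall SSo S2.

Definition PhR c (R : seq P -> seq P -> Prop) (P1 P2 : P) := exists L1 L2,
  R L1 L2 /\ pc P1 (Par (Cst c) (parl L1)) /\ pc P2 (Par (Cst c) (parl L2)).

Definition Xr (P1 P2 : P) := pc P1 (Cst cX) /\
  (pc P2 (Cst cY) \/ exists EL, List.Forall DD EL /\ pc P2 (Par (Cst cD) (parl EL))).

Definition BB (P1 P2 : P) :=
  pc P1 P2 \/ Xr P1 P2 \/ Xr P2 P1 \/ PhR cD DrL P1 P2 \/ PhR cC CrL P1 P2 \/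
  PhR cI IrL P1 P2 \/ PhR cS SrL P1 P2 \/ PhR cC' C'L P1 P2.

Lemma Forall2_sym (R : P -> P -> Prop) l1 l2 :
  (forall x y, R x y -> R y x) -> List.Forall2 R l1 l2 -> List.Forall2 R l2 l1.
Proof. move=> H; elim => {l1 l2}; constructor; auto. Qed.

Lemma PhR_sym c R : (forall L1 L2, R L1 L2 -> R L2 L1) ->
  forall P1 P2, PhR c R P1 P2 -> PhR c R P2 P1.
Proof. by move=> H P1 P2 [L1 [L2 [H1 [H2 H3]]]]; exists L2, L1; split; auto. Qed.

Lemma BB_sym P1 P2 : BB P1 P2 -> BB P2 P1.
Proof.
case=> [H|[H|[H|[H|[H|[H|[H|H]]]]]]].
- by left; apply: pc_sym.
- by right; right; left.
- by right; left.
- do 3 right; left; move: H; apply: PhR_sym.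
  move=> L1 L2 [G [B1 [B2 [E1 [E2 [H1 [H2 [H3 [H4 [H5 [H6 H7]]]]]]]]]]].
  by exists G, B2, B1, E2, E1.
- do 4 right; left; move: H; apply: PhR_sym.
  move=> L1 L2 [H1 [H2 [A1 [A2 [K1 [K2 [K3 [K4 K5]]]]]]]].
  exists H2, H1, A2, A1; split => //; split => //; split => //.
  apply: Forall2_sym K3 => x y [->|[y1 [y2 [E1 [E2 [E3 E4]]]]]]; first by left.
  by right; exists y2, y1.
- do 5 right; left; move: H; apply: PhR_sym => L1 L2; apply: Forall2_sym.
  move=> x y [->|[w [w' [H1 [H2 [H3 H4]]]]]]; first by left.
  by right; exists w', w; do 3 (split => //); case: H4 => [[-> ->]|[[-> ->]|[-> ->]]]; auto.
- do 6 right; left; move: H; apply: PhR_sym => L1 L2; apply: Forall2_sym.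
  move=> x y [->|[w [w' [H1 [H2 [H3 H4]]]]]]; first by left.
  by right; exists w', w; do 3 (split => //); case: H4 => [[-> ->]|[[-> ->]|[-> ->]]]; auto.
- do 7 right; move: H; apply: PhR_sym.
  move=> L1 L2 [H [S1 [S2 [H1 [H2 [H3 H4]]]]]]; by exists H, S2, S1.
Qed.

Lemma BB_pc P1 P2 P3 : BB P1 P2 -> pc P2 P3 -> BB P1 P3.
Proof.
move=> HB H; case: HB => [K|[K|[K|[K|[K|[K|[K|K]]]]]]].
- by left; apply: pc_tr K H.
- case: K => K1 K2; right; left; split => //.
  case: K2 => [K2|[EL [K2 K3]]]; [left|right; exists EL; split => //];
    apply: pc_tr (pc_sym H) _ => //.
- case: K => K1 K2; right; right; left; split => //; apply: pc_tr (pc_sym H) K1.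
- case: K => L1 [L2 [K1 [K2 K3]]]; do 3 right; left; exists L1, L2; split => //;
    split => //; apply: pc_tr (pc_sym H) K3.
- case: K => L1 [L2 [K1 [K2 K3]]]; do 4 right; left; exists L1, L2; split => //;
    split => //; apply: pc_tr (pc_sym H) K3.
- case: K => L1 [L2 [K1 [K2 K3]]]; do 5 right; left; exists L1, L2; split => //;
    split => //; apply: pc_tr (pc_sym H) K3.
- case: K => L1 [L2 [K1 [K2 K3]]]; do 6 right; left; exists L1, L2; split => //;
    split => //; apply: pc_tr (pc_sym H) K3.
- case: K => L1 [L2 [K1 [K2 K3]]]; do 7 right; exists L1, L2; split => //;
    split => //; apply: pc_tr (pc_sym H) K3.
Qed.


Definition TR (P1 Q : P) l (P' : P) :=
  (exists Q'' Q', tau_steps Delta tau Q Q'' /\ step Delta Q'' l Q' /\ BB P1 Q'' /\ BB P' Q')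
  \/ (l = tau /\ BB P' Q).

Lemma TR_left P1 Q l P' Q2 Q' : wts Q Q2 -> sem Q2 l Q' -> BB P1 Q2 -> BB P' Q' ->
  TR P1 Q l P'.
Proof.
move=> H1 H2 H3 H4; left; apply: transfer_weak; first exact: BB_pc.
by exists Q2, Q'.
Qed.

Lemma TR_right P1 Q P' : BB P' Q -> TR P1 Q tau P'.
Proof. by move=> H; right. Qed.

Lemma Forall_mid (Pp : P -> Prop) l1 x l2 :
  List.Forall Pp (l1 ++ x :: l2) -> Pp x /\ List.Forall Pp (l1 ++ l2).
Proof.
move/List.Forall_app => [H1 H2]; inversion H2; subst; split => //.
exact/List.Forall_app.
Qed.

Lemma in_app_split (t : P) A B : List.In t (A ++ B) ->
  (exists A1 A2, A = A1 ++ t :: A2) \/ (exists B1 B2, B = B1 ++ t :: B2).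
Proof.
case/List.in_app_iff => H; [left|right]; exact: List.in_split.
Qed.

Lemma in_app3 (t : P) A B D : List.In t (A ++ B ++ D) ->
  (exists A1 A2, A = A1 ++ t :: A2) \/ (exists B1 B2, B = B1 ++ t :: B2) \/
  (exists D1 D2, D = D1 ++ t :: D2).
Proof.
case/List.in_app_iff => [H|/List.in_app_iff [H|H]];
  [left|right; left|right; right]; exact: List.in_split.
Qed.

Lemma catA3 (A1 A2 B : seq P) t : (A1 ++ t :: A2) ++ B = A1 ++ t :: (A2 ++ B).
Proof. by rewrite -catA. Qed.

Lemma pc_spawn c g L : pc (Par (Par (Cst c) g) (parl L)) (Par (Cst c) (parl (g :: L))).
Proof. exact: pc_parA. Qed.

Lemma perm_mid_cons (t : P) A B : Permutation (t :: A ++ B) (A ++ t :: B).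
Proof. exact: Permutation_middle. Qed.

Lemma tr_id P1 Q l P' : pc P1 Q -> step Delta P1 l P' -> TR P1 Q l P'.
Proof.
move=> H Hs; apply: (@TR_left _ _ _ _ Q P').
- exact: wts_refl.
- apply: step_sem; exact: step_pc H (pc_refl _) Hs.
- by left.
- by left.
Qed.

Lemma tr_C' P1 Q l P' : PhR cC' C'L P1 Q -> step Delta P1 l P' -> TR P1 Q l P'.
Proof.
move=> [L1 [L2 [[H [S1 [S2 [K1 [K2 [K3 K4]]]]]] [HP HQ]]]] Hs.
have HQ' : pc Q (Par (Cst cC') (parl (H ++ S2))).
  by apply: pc_tr HQ _; apply: pc_par => //; exact: perm_pc.
case: (phase_decomp HP Hs) => [[p [Hr Hp]]|[l1 [t [l2 [t' [E [Ht Hp]]]]]]].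
- inversion Hr; subst.
  +
    apply: TR_right; do 7 right; exists (Cst cG' :: L1), L2; split; last split => //.
    * exists H, (Cst cG' :: S1), S2; split.
        apply: Permutation_trans (perm_mid_cons _ _ _); exact: perm_skip.
      split => //; split => //; constructor => //; split => //.
      apply: spawn; [exact: r_C'_t|apply: wts_refl; exact: pc_seq_epsr].
    * apply: pc_tr Hp _; exact: pc_spawn.
  +
    apply: (@TR_left _ _ _ _ (Par (Cst cC') (parl (S1 ++ H))) (Par Eps (parl (S1 ++ H)))).
    * apply: wts_pc (pc_sym HQ') (pc_refl _) _.
      apply: wts_trans (produce _ _) _.
        by apply: List.Forall_impl K3 => x [].
      rewrite catA.
      apply: wts_trans (wrefl (pc_par (pc_refl (Cst cC')) (perm_pc (Permutation_app_comm (S1 ++ H) S2)))) _.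
      apply: kill.
      by apply: List.Forall_impl K4 => x [].
    * apply: rb_ctrl; exact: r_C'_e.
    * do 7 right; exists L1, (S1 ++ H); split; last split => //.
      exists H, S1, S1; do 2 (split => //).
      exact: Permutation_app_comm.
    * left; apply: pc_tr Hp _; apply: pc_par => //.
      apply: perm_pc; apply: Permutation_trans K1 _; exact: Permutation_app_comm.
- rewrite E in K1.
  case: (in_app_split (locate K1)) => [[H1 [H2 EH]]|[S11 [S12 ES]]].
  + subst H; rewrite catA3 in K1; rewrite catA3 in HQ'.
    apply: (@TR_left _ _ _ _ (Par (Cst cC') (parl (H1 ++ t :: H2 ++ S2)))
               (Par (Cst cC') (parl (H1 ++ t' :: H2 ++ S2)))).
    * exact: wrefl HQ'.
    * exact: rb_comp.
    * do 7 right; exists L1, (H1 ++ t :: H2 ++ S2); split; last (split; closepc).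
      exists (H1 ++ t :: H2), S1, S2; rewrite !catA3; split; first by rewrite E.
      by split; [apply: Permutation_refl|split].
    * do 7 right; exists (l1 ++ t' :: l2), (H1 ++ t' :: H2 ++ S2); split; last (split; closepc).
      exists (H1 ++ t' :: H2), S1, S2; rewrite !catA3; split; first exact: perm_repl K1.
      by split; [apply: Permutation_refl|split].
  + subst S1; case: (Forall_mid K3) => [[Ht1 Ht2] K5].
    apply: (@TR_left _ _ _ _ (Par (Cst cC') (parl ([::] ++ t :: H ++ S2)))
               (Par (Cst cC') (parl ([::] ++ t' :: H ++ S2)))).
    * apply: wts_pc (pc_sym HQ') (pc_refl _) _.
      apply: (produce (c := cC') (S := [:: t]) (H ++ S2)).
      by constructor.
    * exact: rb_comp.
    * do 7 right; exists L1, (t :: H ++ S2); split; last (split; closepc).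
      exists H, (S11 ++ t :: S12), (t :: S2); split; first by rewrite E.
      split; first exact: perm_mid_cons.
      by split => //; constructor.
    * do 7 right; exists (l1 ++ t' :: l2), (t' :: H ++ S2); split; last (split; closepc).
      exists (t' :: H), (S11 ++ S12), S2; split.
      - rewrite catA in K1; have := perm_repl t' K1; rewrite -catA => K6.
        apply: Permutation_trans K6 _; apply: Permutation_sym.
        by rewrite /= !catA; exact: perm_mid_cons.
      - by split; [apply: Permutation_refl|split].
Qed.


Lemma perm_catC (T : Type) (a b : seq T) : Permutation (cat a b) (cat b a).
Proof. exact: Permutation_app_comm. Qed.
Lemma perm_trR (T : Type) (L M R : seq T) : Permutation L M -> Permutation M R -> Permutation L R.
Proof. exact: Permutation_trans. Qed.
Lemma perm_headC (T : Type) (p L R : seq T) : Permutation L R -> Permutation (cat p L) (cat p R).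
Proof. exact: Permutation_app_head. Qed.
Lemma perm_consC (T : Type) (x : T) (L R : seq T) : Permutation L R -> Permutation (x :: L) (x :: R).
Proof. exact: perm_skip. Qed.
Lemma perm_reflC (T : Type) (L : seq T) : Permutation L L.
Proof. exact: Permutation_refl. Qed.
Ltac prot := match goal with
  | |- Permutation ?L (cat ?a ?R) => apply: (@perm_trR _ L (cat R a) (cat a R)); [|exact: perm_catC]
  | |- Permutation ?L (?x :: ?R) => apply: (@perm_trR _ L (cat R [:: x]) (x :: R)); [|exact (@perm_catC _ R [:: x])]
  end.
Ltac pstep := first [ apply: perm_reflC | apply: perm_headC | apply: perm_consC | prot ].
Ltac psolve := do 60 (try (rewrite -?catA /=; pstep)).
Ltac fin := repeat (first [assumption | exact: perm_reflC | split]).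

Lemma pc_mid l1 (t t' : P) l2 : pc t t' -> pc (parl (l1 ++ t :: l2)) (parl (l1 ++ t' :: l2)).
Proof.
move=> H; apply: pc_tr (parl_mid _ _ _) _; apply: pc_tr _ (pc_sym (parl_mid _ _ _)).
exact: pc_par.
Qed.

Lemma size_mid (T : Type) (a b c : seq T) (x y : T) :
  size (a ++ x :: b) = size (y :: c) -> size (a ++ b) = size c.
Proof. by rewrite !size_cat /= addnS => [[]]. Qed.

Lemma Lc_V x : Lc (map Vc x) = vcat x.
Proof. by elim: x => //= k x IH; rewrite Lc_cons IH. Qed.
Lemma Lc_U x : Lc (map Uc x) = ucat x.
Proof. by elim: x => //= k x IH; rewrite Lc_cons IH. Qed.
Lemma Kc_V x : Kc (map Vc x) = x.
Proof. by elim: x => //= k x IH; rewrite Kc_cons IH. Qed.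
Lemma Kc_U x : Kc (map Uc x) = x.
Proof. by elim: x => //= k x IH; rewrite Kc_cons IH. Qed.
Lemma Lc_cat w1 w2 : Lc (w1 ++ w2) = Lc w1 ++ Lc w2.
Proof. by rewrite /Lc map_cat flatten_cat. Qed.
Lemma Kc_cat w1 w2 : Kc (w1 ++ w2) = Kc w1 ++ Kc w2.
Proof. by rewrite /Kc map_cat flatten_cat. Qed.
Lemma vcat_cat x y : vcat (x ++ y) = vcat x ++ vcat y.
Proof. by rewrite /vcat map_cat flatten_cat. Qed.

Lemma toC_VU x r : map toC (map (pair false) x ++ map (pair true) r) = map Vc x ++ map Uc r.
Proof. by rewrite map_cat -!map_comp. Qed.

Lemma Bthr_bal t : Bthr t -> balC t.
Proof.
case=> x [r [-> E]]; exists (map (pair false) x ++ map (pair true) r).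
rewrite toC_VU; split => //.
by rewrite Lc_cat Kc_cat Lc_V Lc_U Kc_V Kc_U vcat_cat E.
Qed.

Lemma plainVU x r : plainw (map Vc x ++ map Uc r).
Proof. by apply/allP_cat; split; apply: allP_map. Qed.

Lemma plain_toC y : plainw (map toC y).
Proof. by apply: allP_map => [[[] k]]. Qed.

Lemma DD_Gu : DD (Cst cGu).
Proof.
split => //; apply: spawn; [exact: r_D_t|apply: wrefl; exact: pc_seq_epsr].
Qed.

Lemma DD_plain x r : DD (wordp (map Vc x ++ map Uc r)).
Proof. split; [exact: prod_D_plain|exact: plain_vcf (plainVU x r)]. Qed.

Lemma DD_Z x r : DD (wordp (cZ :: map Vc x ++ map Uc r)).
Proof. split; [exact: prod_D_Z|split => //; exact: plain_vcf (plainVU x r)]. Qed.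

Lemma Forall2_pairC_refl l : List.Forall2 pairC l l.
Proof. by elim: l => [|x l IH]; constructor => //; left. Qed.

Lemma Forall_DD_wts S : List.Forall DD S -> List.Forall (fun e => wts (Cst cD) (Par (Cst cD) e)) S.
Proof. by apply: List.Forall_impl => x []. Qed.
Lemma Forall_DD_vcf S : List.Forall DD S -> List.Forall vcf S.
Proof. by apply: List.Forall_impl => x []. Qed.

Lemma tr_D P1 Q l P' : PhR cD DrL P1 Q -> step Delta P1 l P' -> TR P1 Q l P'.
Proof.
move=> [L1 [L2 [[G [B1 [B2 [E1 [E2 [K1 [K2 [K3 [K4 [K5 [K6 K7]]]]]]]]]]] [HP HQ]]]] Hs.
have HQ' : pc Q (Par (Cst cD) (parl (G ++ B2 ++ E2))).
  by apply: pc_tr HQ _; apply: pc_par => //; exact: perm_pc.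
case: (phase_decomp HP Hs) => [[p [Hr Hp]]|[l1 [t [l2 [t' [E [Ht Hp]]]]]]].
- inversion Hr; subst.
  +
    apply: TR_right; do 3 right; left; exists (Cst cGu :: L1), L2.
    split; last by split => //; apply: pc_tr Hp _; exact: pc_spawn.
    exists G, B1, B2, (Cst cGu :: E1), E2; split.
      by apply: perm_trR (perm_consC _ K1) _; psolve.
    do 5 (split => //); constructor => //; exact: DD_Gu.
  +
    apply: (@TR_left _ _ _ _ (Par (Cst cD) (parl (G ++ B2 ++ E1)))
                (Par (Cst cC) (parl (G ++ B2 ++ E1)))).
    * apply: pc_wts HQ' (pc_refl _) _.
      apply: wts_trans (produce (G ++ B2 ++ E2) (Forall_DD_wts K6)) _.
      apply: wts_trans (wrefl (pc_par (pc_refl (Cst cD))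
                (perm_pc (l2 := E2 ++ G ++ B2 ++ E1) _))) _.
        by psolve.
      exact: kill (G ++ B2 ++ E1) (Forall_DD_vcf K7).
    * apply: rb_ctrl; exact: r_D_D.
    * do 3 right; left; exists L1, (G ++ B2 ++ E1); split; last by split.
      by exists G, B1, B2, E1, E1; fin.
    * do 4 right; left; exists L1, (G ++ B2 ++ E1); split; last by split.
      exists (G ++ E1), (G ++ E1), B1, B2; split; first by apply: perm_trR K1 _; psolve.
      split; first by psolve.
      split; first exact: Forall2_pairC_refl.
      by split; [move: K3|move: K4]; apply: List.Forall_impl => x H; right; exact: Bthr_bal H.
- rewrite E in K1.
  case: (in_app3 (locate K1)) => [[G1 [G2 EG]]|[[B11 [B12 EB]]|[E11 [E12 EE]]]].
  + subst G; rewrite catA3 in K1; rewrite catA3 in HQ'.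
    apply: (@TR_left _ _ _ _ (Par (Cst cD) (parl (G1 ++ t :: G2 ++ B2 ++ E2)))
               (Par (Cst cD) (parl (G1 ++ t' :: G2 ++ B2 ++ E2)))).
    * exact: wrefl HQ'.
    * exact: rb_comp.
    * do 3 right; left; exists L1, (G1 ++ t :: G2 ++ B2 ++ E2); split; last (split; closepc).
      exists (G1 ++ t :: G2), B1, B2, E1, E2; rewrite !catA3; split; first by rewrite E.
      by split; [apply: perm_reflC|do 4 (split => //)].
    * do 3 right; left; exists (l1 ++ t' :: l2), (G1 ++ t' :: G2 ++ B2 ++ E2).
      split; last (split; closepc).
      exists (G1 ++ t' :: G2), B1, B2, E1, E2; rewrite !catA3; split; first exact: perm_repl K1.
      by split; [apply: perm_reflC|do 4 (split => //)].
  + (* t is one of the balanced G_v threads *)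
    subst B1; case: (Forall_mid K3) => [[x [r [Et Er]]] K3'].
    have K1' : Permutation (l1 ++ t :: l2) ((G ++ B11) ++ t :: (B12 ++ E1)).
      by apply: perm_trR K1 _; psolve.
    subst t; case: (Gv_inv Ht) => [[-> [k Hk]]|[[-> Hk]|[-> Hk]]].
    * apply: TR_right; do 3 right; left.
      exists (l1 ++ wordp (cGv :: map Vc (k :: x) ++ map Uc r) :: l2), L2.
      split; last by split => //; apply: pc_tr Hp _; apply: pc_par => //; exact: pc_mid.
      exists G, (B11 ++ wordp (cGv :: map Vc (k :: x) ++ map Uc r) :: B12), B2, E1, E2.
      split; first by apply: perm_trR (perm_repl _ K1') _; psolve.
      split => //; split.
        apply/List.Forall_app; case/List.Forall_app: K3' => H1 H2; split => //.
        by constructor => //; exists (k :: x), r.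
      by split => //; move: K5; rewrite !size_cat.
    * case: B2 K2 K4 K5 HQ' => [|b B2] K2 K4 K5 HQ'; first by move: K5; rewrite size_cat /= addnS.
      move: (List.Forall_inv K4) (List.Forall_inv_tail K4) => [x2 [r2 [Eb Er2]]] K4'; subst b.
      apply: (@TR_left _ _ _ _ (Par (Cst cD) (parl (G ++ wordp (cGv :: map Vc x2 ++ map Uc r2) :: B2 ++ E2)))
               (Par (Cst cD) (parl (G ++ wordp (map Vc x2 ++ map Uc r2) :: B2 ++ E2)))).
      - exact: wrefl HQ'.
      - apply: rb_comp; apply: hstep0; exact: r_Gv_e.
      - do 3 right; left; eexists L1, _; split; last (split; closepc).
        exists G, (B11 ++ wordp (cGv :: map Vc x ++ map Uc r) :: B12),
          (wordp (cGv :: map Vc x2 ++ map Uc r2) :: B2), E1, E2.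
        by rewrite E; fin.
      - do 3 right; left.
        exists (l1 ++ wordp (map Vc x ++ map Uc r) :: l2),
               (G ++ wordp (map Vc x2 ++ map Uc r2) :: B2 ++ E2).
        split; last by split => //; apply: pc_tr Hp _; apply: pc_par => //; exact: pc_mid.
        exists G, (B11 ++ B12), B2, (wordp (map Vc x ++ map Uc r) :: E1),
          (wordp (map Vc x2 ++ map Uc r2) :: E2).
        split; first by apply: perm_trR (perm_repl _ K1') _; psolve.
        split; first by psolve.
        do 2 (split => //); split; first exact: size_mid K5.
        by split; constructor => //; exact: DD_plain.
    * case: B2 K2 K4 K5 HQ' => [|b B2] K2 K4 K5 HQ'; first by move: K5; rewrite size_cat /= addnS.
      move: (List.Forall_inv K4) (List.Forall_inv_tail K4) => [x2 [r2 [Eb Er2]]] K4'; subst b.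
      apply: (@TR_left _ _ _ _ (Par (Cst cD) (parl (G ++ wordp (cGv :: map Vc x2 ++ map Uc r2) :: B2 ++ E2)))
               (Par (Cst cD) (parl (G ++ wordp (cZ :: map Vc x2 ++ map Uc r2) :: B2 ++ E2)))).
      - exact: wrefl HQ'.
      - apply: rb_comp; apply: hstep1; exact: r_Gv_V.
      - do 3 right; left; eexists L1, _; split; last (split; closepc).
        exists G, (B11 ++ wordp (cGv :: map Vc x ++ map Uc r) :: B12),
          (wordp (cGv :: map Vc x2 ++ map Uc r2) :: B2), E1, E2.
        by rewrite E; fin.
      - do 3 right; left.
        exists (l1 ++ wordp (cZ :: map Vc x ++ map Uc r) :: l2),
               (G ++ wordp (cZ :: map Vc x2 ++ map Uc r2) :: B2 ++ E2).
        split; last by split => //; apply: pc_tr Hp _; apply: pc_par => //; exact: pc_mid.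
        exists G, (B11 ++ B12), B2, (wordp (cZ :: map Vc x ++ map Uc r) :: E1),
          (wordp (cZ :: map Vc x2 ++ map Uc r2) :: E2).
        split; first by apply: perm_trR (perm_repl _ K1') _; psolve.
        split; first by psolve.
        do 2 (split => //); split; first exact: size_mid K5.
        by split; constructor => //; exact: DD_Z.
  + (* t is one of the D-derivable threads *)
    subst E1; case: (Forall_mid K6) => [Ht1 K6'].
    have K1' : Permutation (l1 ++ t :: l2) ((G ++ B1 ++ E11) ++ t :: E12).
      by apply: perm_trR K1 _; psolve.
    apply: (@TR_left _ _ _ _ (Par (Cst cD) (parl ([::] ++ t :: G ++ B2 ++ E2)))
               (Par (Cst cD) (parl ([::] ++ t' :: G ++ B2 ++ E2)))).
    * apply: pc_wts HQ' (pc_refl _) _.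
      apply: (produce (c := cD) (S := [:: t]) (G ++ B2 ++ E2)).
      by constructor => //; case: Ht1.
    * exact: rb_comp.
    * do 3 right; left; exists L1, (t :: G ++ B2 ++ E2); split; last (split; closepc).
      exists G, B1, B2, (E11 ++ t :: E12), (t :: E2); split; first by rewrite E.
      split; first by psolve.
      by do 4 (split => //); constructor.
    * do 3 right; left; exists (l1 ++ t' :: l2), (t' :: G ++ B2 ++ E2); split; last (split; closepc).
      exists (t' :: G), B1, B2, (E11 ++ E12), E2; split.
        by apply: perm_trR (perm_repl _ K1') _; psolve.
      by split; [apply: perm_reflC|do 4 (split => //)].
Qed.


Lemma F2_split (R : P -> P -> Prop) a x b l2 : List.Forall2 R (a ++ x :: b) l2 ->
  exists a' y b', l2 = a' ++ y :: b' /\ List.Forall2 R a a' /\ R x y /\ List.Forall2 R b b'.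
Proof.
move/List.Forall2_app_inv_l => [a' [l' [H1 [H2 E]]]].
inversion H2; subst; exists a', y, l'0; split => //.
Qed.

Lemma F2_mid (R : P -> P -> Prop) a a' x y b b' :
  List.Forall2 R a a' -> R x y -> List.Forall2 R b b' ->
  List.Forall2 R (a ++ x :: b) (a' ++ y :: b').
Proof. move=> H1 H2 H3; apply: List.Forall2_app => //; by constructor. Qed.

Lemma F2_app (R : P -> P -> Prop) a a' b b' :
  List.Forall2 R a a' -> List.Forall2 R b b' -> List.Forall2 R (a ++ b) (a' ++ b').
Proof. exact: List.Forall2_app. Qed.

Lemma toC_V K : map toC (map (pair false) K) = map Vc K.
Proof. by rewrite -map_comp. Qed.

Lemma absC_vcf t : absC t -> vcf t.
Proof.
case=> [[_ H]|[y [-> _]]] //; split => //; exact: plain_vcf (plain_toC y).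
Qed.

Lemma absC_wts t : CCa t -> wts (Cst cC) (Par (Cst cC) t).
Proof. by case. Qed.

Lemma CCa_plain y : CCa (wordp (map toC y)).
Proof. split; [exact: prod_C_plain|exact: plain_vcf (plain_toC y)]. Qed.

Lemma balC_V K : balC (wordp (cGv :: map Vc K)).
Proof. exists (map (pair false) K); rewrite toC_V Lc_V Kc_V; split => //. Qed.

Lemma pairC_ipair t t' : pairC t t' -> ipair Lc t t' /\ ipair Kc t t'.
Proof.
case=> [->|[y [y' [-> [-> [E1 E2]]]]]]; first by split; left.
split; right; exists (map toC y), (map toC y'); do 3 (split => //; try exact: plain_toC);
  by right; right.
Qed.

Definition fpair (t t' : P) := ipair Lc t t' /\ ipair Kc t t'.

Lemma mkA A1 : List.Forall absC A1 -> exists A1', List.Forall2 fpair A1 A1' /\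
  List.Forall (fun e => wts (Cst cC) (Par (Cst cC) e)) A1' /\ List.Forall absC A1'.
Proof.
elim: A1 => [|t A1 IH] H; first by exists [::]; split => //; split.
inversion H; subst; case: (IH H3) => A1' [K1 [K2 K3]].
case: H2 => [Ht|[y [Et Eb]]].
- exists (t :: A1'); split; first by constructor => //; split; left.
  by split; constructor => //; [case: Ht|left].
- set K := Kc (map toC y).
  exists (wordp (cGv :: map Vc K) :: A1'); split.
    constructor => //; subst t; split; right; exists (map toC y), (map Vc K);
      (split; [exact: plain_toC|]); (split; [exact: allP_map|]); split;
      try (by right; left); [by rewrite Lc_V|by rewrite Kc_V].
  split; constructor => //; [exact: prod_C_Gv|right; exact: balC_V].
Qed.

Lemma softF_C' T (F : seq C -> seq T) t t' : softF F t t' -> SSo t /\ SSo t'.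
Proof.
case=> w [w' [H1 [H2 [_ H]]]].
case: H => [[-> ->]|[[-> ->]|[-> ->]]]; split; split.
- exact: prod_C'_plain.
- exact: plain_vcf.
- exact: prod_C'_plain.
- exact: plain_vcf.
- exact: prod_C'_Gv.
- by split => //; exact: plain_vcf.
- exact: prod_C'_Gv.
- by split => //; exact: plain_vcf.
- exact: prod_C'_Z.
- by split => //; exact: plain_vcf.
- exact: prod_C'_Z.
- by split => //; exact: plain_vcf.
Qed.

Lemma ipair_C'L T (F : seq C -> seq T) L1 L2 : List.Forall2 (ipair F) L1 L2 -> C'L L1 L2.
Proof.
elim => {L1 L2} [|t t' L1 L2 Ht _ [H [S1 [S2 [K1 [K2 [K3 K4]]]]]]].
- by exists [::], [::], [::].
- case: Ht => [<-|Hs].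
  + exists (t :: H), S1, S2; split; first exact: perm_consC.
    by split; [exact: perm_consC|split].
  + case: (softF_C' Hs) => Ht Ht'.
    exists H, (t :: S1), (t' :: S2); split.
      by apply: perm_trR (perm_consC _ K1) _; psolve.
    split; first by apply: perm_trR (perm_consC _ K2) _; psolve.
    by split; constructor.
Qed.


Lemma F2_pairC_ipair H1 H2 : List.Forall2 pairC H1 H2 ->
  List.Forall2 (ipair Lc) H1 H2 /\ List.Forall2 (ipair Kc) H1 H2.
Proof.
elim => {H1 H2} [|x y H1 H2 Hxy _ [K1 K2]]; first by split.
by case: (pairC_ipair Hxy) => A B; split; constructor.
Qed.

Lemma F2_fpair A1 A1' : List.Forall2 fpair A1 A1' ->
  List.Forall2 (ipair Lc) A1 A1' /\ List.Forall2 (ipair Kc) A1 A1'.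
Proof.
elim => {A1 A1'} [|x y A1 A1' [K1 K2] _ [K3 K4]]; first by split.
by split; constructor.
Qed.

Lemma Forall_absC_vcf S : List.Forall absC S -> List.Forall vcf S.
Proof. by apply: List.Forall_impl => x; exact: absC_vcf. Qed.

Lemma tr_C P1 Q l P' : PhR cC CrL P1 Q -> step Delta P1 l P' -> TR P1 Q l P'.
Proof.
move=> [L1 [L2 [[H1 [H2 [A1 [A2 [K1 [K2 [K3 [K4 K5]]]]]]]] [HP HQ]]]] Hs.
have HQ' : pc Q (Par (Cst cC) (parl (H2 ++ A2))).
  by apply: pc_tr HQ _; apply: pc_par => //; exact: perm_pc.
have HP' : pc P1 (Par (Cst cC) (parl (H1 ++ A1))).
  by apply: pc_tr HP _; apply: pc_par => //; exact: perm_pc.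
have Hswitch : forall c', (c' = cI \/ c' = cS) -> forall l, Delta cC l (Cst c') ->
   pc P' (Par (Cst c') (parl L1)) -> TR P1 Q l P'.
  move=> c' Hc' l0 Hr Hp.
  case: (mkA K4) => A1' [M1 [M2 M3]].
  case: (F2_fpair M1) => M4 M5.
  case: (F2_pairC_ipair K3) => M6 M7.
  apply: (@TR_left _ _ _ _ (Par (Cst cC) (parl (H2 ++ A1'))) (Par (Cst c') (parl (H2 ++ A1')))).
  - apply: pc_wts HQ' (pc_refl _) _.
    apply: wts_trans (produce (H2 ++ A2) M2) _.
    apply: wts_trans (wrefl (pc_par (pc_refl (Cst cC))
                (perm_pc (l2 := A2 ++ H2 ++ A1') _))) _.
      by psolve.
    exact: kill (H2 ++ A1') (Forall_absC_vcf K5).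
  - exact: rb_ctrl.
  - do 4 right; left; exists L1, (H2 ++ A1'); split; last by split.
    by exists H1, H2, A1, A1'; fin.
  - case: Hc' => ?; subst c'.
    + do 5 right; left; exists (H1 ++ A1), (H2 ++ A1'); split; last split => //.
      * exact: F2_app.
      * apply: pc_tr Hp _; apply: pc_par => //; exact: perm_pc.
    + do 6 right; left; exists (H1 ++ A1), (H2 ++ A1'); split; last split => //.
      * exact: F2_app.
      * apply: pc_tr Hp _; apply: pc_par => //; exact: perm_pc.
case: (phase_decomp HP Hs) => [[p [Hr Hp]]|[l1 [t [l2 [t' [E [Ht Hp]]]]]]].
- inversion Hr; subst.
  + exact: Hswitch (or_introl erefl) _ Hr Hp.
  + exact: Hswitch (or_intror erefl) _ Hr Hp.
  +
    apply: (@TR_left _ _ _ _ (Par (Cst cC) (parl (H2 ++ A2)))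
               (Par (Par (Cst cC) (Cst cG)) (parl (H2 ++ A2)))).
    * exact: wrefl HQ'.
    * apply: rb_ctrl; exact: r_C_G.
    * do 4 right; left; exists L1, (H2 ++ A2); split; last by split.
      by exists H1, H2, A1, A2; fin.
    * do 4 right; left; exists (Cst cG :: L1), (Cst cG :: H2 ++ A2).
      split; last split.
      - exists (Cst cG :: H1), (Cst cG :: H2), A1, A2; split; first exact: perm_consC.
        split; first exact: perm_reflC.
        by split; first by constructor => //; left.
      - apply: pc_tr Hp _; exact: pc_spawn.
      - exact: pc_spawn.
  +
    apply: TR_right; do 4 right; left.
    exists (wordp [:: cGv] :: L1), L2; split; last split => //.
    * exists H1, H2, (wordp [:: cGv] :: A1), A2; split.
        by apply: perm_trR (perm_consC _ K1) _; psolve.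
      split => //; split => //; split => //; constructor => //.
      by right; exists [::].
    * apply: pc_tr Hp _; apply: pc_tr (pc_spawn _ _ _) _; apply: pc_par => //.
      apply: pc_par => //; exact: pc_w1.
- rewrite E in K1.
  have K1x : Permutation (l1 ++ t :: l2) (H1 ++ A1) by [].
  case: (in_app_split (locate K1)) => [[Ha [Hb EH]]|[A11 [A12 EA]]].
  + subst H1; case: (F2_split K3) => Ha' [t2 [Hb' [EH2 [M1 [M2 M3]]]]]; subst H2.
    rewrite catA3 in K1; rewrite catA3 in HQ'.
    case: M2 => [Et2|[y [y2 [Et [Et2 [EL EK]]]]]].
    * subst t2.
      apply: (@TR_left _ _ _ _ (Par (Cst cC) (parl (Ha' ++ t :: Hb' ++ A2)))
                 (Par (Cst cC) (parl (Ha' ++ t' :: Hb' ++ A2)))).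
      - exact: wrefl HQ'.
      - exact: rb_comp.
      - do 4 right; left; eexists L1, _; split; last (split; closepc).
        exists (Ha ++ t :: Hb), (Ha' ++ t :: Hb'), A1, A2; rewrite !catA3.
        by rewrite E; fin; apply: F2_mid => //; left.
      - do 4 right; left; eexists (l1 ++ t' :: l2), _; split; last (split; closepc).
        exists (Ha ++ t' :: Hb), (Ha' ++ t' :: Hb'), A1, A2; rewrite !catA3.
        split; first exact: perm_repl K1.
        by fin; apply: F2_mid => //; left.
    * subst t t2; case: (Z_inv Ht) => Hl Ht'.
      apply: (@TR_left _ _ _ _ (Par (Cst cC) (parl (Ha' ++ wordp (cZ :: map toC y2) :: Hb' ++ A2)))
                 (Par (Cst cC) (parl (Ha' ++ wordp (map toC y2) :: Hb' ++ A2)))).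
      - exact: wrefl HQ'.
      - apply: rb_comp; case: Hl => ->; apply: hstep0; [exact: r_Z_t|exact: r_Z_Z].
      - do 4 right; left; eexists L1, _; split; last (split; closepc).
        exists (Ha ++ wordp (cZ :: map toC y) :: Hb), (Ha' ++ wordp (cZ :: map toC y2) :: Hb'), A1, A2.
        rewrite !catA3; rewrite E; fin.


      - do 4 right; left.
        exists (l1 ++ wordp (map toC y) :: l2), (Ha' ++ wordp (map toC y2) :: Hb' ++ A2).
        split; last by split => //; apply: pc_tr Hp _; apply: pc_par => //; exact: pc_mid.
        exists (Ha ++ Hb), (Ha' ++ Hb'), (wordp (map toC y) :: A1), (wordp (map toC y2) :: A2).
        split; first by apply: perm_trR (perm_repl _ K1) _; psolve.
        split; first by psolve.
        split; first exact: F2_app.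
        by split; constructor => //; left; exact: CCa_plain.
  + subst A1; case: (Forall_mid K4) => [Hat K4'].
    have K1' : Permutation (l1 ++ t :: l2) ((H1 ++ A11) ++ t :: A12).
      by apply: perm_trR K1 _; psolve.
    case: Hat => [Hca|[y [Et Eb]]].
    * (* absorbable by copying *)
      apply: (@TR_left _ _ _ _ (Par (Cst cC) (parl ([::] ++ t :: H2 ++ A2)))
                 (Par (Cst cC) (parl ([::] ++ t' :: H2 ++ A2)))).
      - apply: pc_wts HQ' (pc_refl _) _.
        apply: (produce (c := cC) (S := [:: t]) (H2 ++ A2)).
        by constructor => //; case: Hca.
      - exact: rb_comp.
      - do 4 right; left; exists L1, (t :: H2 ++ A2); split; last (split; closepc).
        exists H1, H2, (A11 ++ t :: A12), (t :: A2); split; first by rewrite E.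
        split; first by psolve.
        by fin; constructor => //; left.
      - do 4 right; left; exists (l1 ++ t' :: l2), (t' :: H2 ++ A2); split; last (split; closepc).
        exists (t' :: H1), (t' :: H2), (A11 ++ A12), A2; split.
          by apply: perm_trR (perm_repl _ K1') _; psolve.
        by fin; constructor => //; left.
    * subst t; case: (Gv_inv Ht) => [[-> [k Hk]]|[[-> Hk]|[-> Hk]]].
      - apply: TR_right; do 4 right; left.
        exists (l1 ++ wordp (cGv :: map toC ((false, k) :: y)) :: l2), L2.
        split; last by split => //; apply: pc_tr Hp _; apply: pc_par => //; exact: pc_mid.
        exists H1, H2, (A11 ++ wordp (cGv :: map toC ((false, k) :: y)) :: A12), A2.
        split; first by apply: perm_trR (perm_repl _ K1') _; psolve.
        fin; apply/List.Forall_app; case/List.Forall_app: K4' => M1 M2; split => //.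
        constructor => //; right; exists ((false, k) :: y); split => //.
        by rewrite /= Lc_cons Kc_cons Eb.
      - apply: TR_right; do 4 right; left.
        exists (l1 ++ wordp (map toC y) :: l2), L2.
        split; last by split => //; apply: pc_tr Hp _; apply: pc_par => //; exact: pc_mid.
        exists H1, H2, (A11 ++ wordp (map toC y) :: A12), A2.
        split; first by apply: perm_trR (perm_repl _ K1') _; psolve.
        fin; apply/List.Forall_app; case/List.Forall_app: K4' => M1 M2; split => //.
        by constructor => //; left; exact: CCa_plain.
      - set K := Kc (map toC y).
        apply: (@TR_left _ _ _ _ (Par (Cst cC) (parl ([::] ++ wordp (cGv :: map Vc K) :: H2 ++ A2)))
                 (Par (Cst cC) (parl ([::] ++ wordp (cZ :: map Vc K) :: H2 ++ A2)))).
        + apply: pc_wts HQ' (pc_refl _) _.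
          apply: (produce (c := cC) (S := [:: wordp (cGv :: map Vc K)]) (H2 ++ A2)).
          by constructor => //; exact: prod_C_Gv.
        + apply: rb_comp; apply: hstep1; exact: r_Gv_V.
        + do 4 right; left; eexists L1, _; split; last (split; closepc).
          exists H1, H2, (A11 ++ wordp (cGv :: map toC y) :: A12), (wordp (cGv :: map Vc K) :: A2).
          split; first by rewrite E.
          split; first by psolve.
          by fin; constructor => //; right; exact: balC_V.
        + do 4 right; left.
          exists (l1 ++ wordp (cZ :: map toC y) :: l2), (wordp (cZ :: map Vc K) :: H2 ++ A2).
          split; last by split => //; apply: pc_tr Hp _; apply: pc_par => //; exact: pc_mid.
          exists (wordp (cZ :: map toC y) :: H1), (wordp (cZ :: map Vc K) :: H2), (A11 ++ A12), A2.
          split; first by apply: perm_trR (perm_repl _ K1') _; psolve.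
          fin; constructor => //; right; exists y, (map (pair false) K).
          by rewrite toC_V Lc_V Kc_V.
Qed.


Section Phase.
Variables (T : Type) (F : seq C -> seq T) (ctrl : C) (lam : Ac)
  (free : Ac -> Prop) (obs : T -> Ac).
Hypothesis HF_cons : forall c w, F (c :: w) = F [:: c] ++ F w.
Hypothesis Hctrl : forall l p, Delta ctrl l p ->
  (free l /\ p = Cst ctrl) \/ (l = lam /\ p = Cst cC').
Hypothesis Hfree : forall l, free l -> Delta ctrl l (Cst ctrl).
Hypothesis Hlam : Delta ctrl lam (Cst cC').
Hypothesis Hstep : forall w l r, plainw w -> sem (wordp w) l r ->
  exists w2, pc r (wordp w2) /\ plainw w2 /\
  ((F w2 = F w /\ (l = tau \/ free l)) \/ (exists a, F w = a :: F w2 /\ (l = tau \/ l = obs a))).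
Hypothesis Hmatch : forall w a rho x, plainw w -> F w = a :: rho -> (x = tau \/ x = obs a) ->
  exists w1 w2, wts (wordp w) (wordp w1) /\ sem (wordp w1) x (wordp w2) /\
    plainw w1 /\ plainw w2 /\ F w1 = F w /\ F w2 = rho.
Hypothesis Hinj : forall P1 P2, PhR ctrl (List.Forall2 (ipair F)) P1 P2 -> BB P1 P2.

Lemma tr_F P1 Q l P' : PhR ctrl (List.Forall2 (ipair F)) P1 Q -> step Delta P1 l P' ->
  TR P1 Q l P'.
Proof.
move=> [L1 [L2 [K [HP HQ]]]] Hs.
case: (phase_decomp HP Hs) => [[p [Hr Hp]]|[l1 [t [l2 [t' [E [Ht Hp]]]]]]].
- case: (Hctrl Hr) => [[Hf Ep]|[El Ep]]; subst p; try subst l.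
  + apply: (@TR_left _ _ _ _ Q Q).
    * exact: wrefl.
    * apply: (sem_pc Delta HQ l Q).2; apply: sem_pc_r (rb_ctrl _ (Hfree Hf)) _.
      exact: pc_sym.
    * by apply: Hinj; exists L1, L2.
    * by apply: Hinj; exists L1, L2.
  + apply: (@TR_left _ _ _ _ Q (Par (Cst cC') (parl L2))).
    * exact: wrefl.
    * apply: (sem_pc Delta HQ lam _).2; exact: rb_ctrl.
    * by apply: Hinj; exists L1, L2.
    * do 7 right; exists L1, L2; split; last by split.
      exact: ipair_C'L K.
- subst L1; case: (F2_split K) => l1' [t2 [l2' [EL2 [M1 [M2 M3]]]]]; subst L2.
  (* generic conclusion when the right thread does a matching step *)
  have Hmir : forall t2a t2' t'', wts t2 t2a -> sem t2a l t2' -> pc t' t'' ->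
      ipair F t t2a -> ipair F t'' t2' -> TR P1 Q l P'.
    move=> t2a t2' t'' H1 H2 H3 H4 H5.
    apply: (@TR_left _ _ _ _ (Par (Cst ctrl) (parl (l1' ++ t2a :: l2')))
                  (Par (Cst ctrl) (parl (l1' ++ t2' :: l2')))).
    + apply: pc_wts HQ (pc_refl _) _; exact: rb_wts_comp.
    + exact: rb_comp.
    + by apply: Hinj; exists (l1 ++ t :: l2), (l1' ++ t2a :: l2'); split => //; exact: F2_mid.
    + apply: Hinj; exists (l1 ++ t'' :: l2), (l1' ++ t2' :: l2'); split; first exact: F2_mid.
      by split => //; apply: pc_tr Hp _; apply: pc_par => //; exact: pc_mid.
  have Hstay : forall t'', pc t' t'' -> ipair F t'' t2 -> l = tau -> TR P1 Q l P'.
    move=> t'' H1 H2 ->; apply: TR_right; apply: Hinj.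
    exists (l1 ++ t'' :: l2), (l1' ++ t2 :: l2'); split; first exact: F2_mid.
    by split => //; apply: pc_tr Hp _; apply: pc_par => //; exact: pc_mid.
  have Hfr : forall t'', pc t' t'' -> ipair F t'' t2 -> free l -> TR P1 Q l P'.
    move=> t'' H1 H2 Hf; apply: (@TR_left _ _ _ _ Q Q).
    + exact: wrefl.
    + apply: (sem_pc Delta HQ l Q).2; apply: sem_pc_r (rb_ctrl _ (Hfree Hf)) _.
      exact: pc_sym.
    + by apply: Hinj; exists (l1 ++ t :: l2), (l1' ++ t2 :: l2'); split => //; exact: F2_mid.
    + apply: Hinj; exists (l1 ++ t'' :: l2), (l1' ++ t2 :: l2'); split; first exact: F2_mid.
      by split => //; apply: pc_tr Hp _; apply: pc_par => //; exact: pc_mid.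
  case: M2 => [Et2|[w [w' [Pw [Pw' [EF Hsh]]]]]].
  + subst t2; apply: (Hmir t t' t') => //; [exact: wrefl|by left|by left].
  + case: Hsh => [[Et Et2]|[[Et Et2]|[Et Et2]]]; subst t t2.
    *
      case: (Hstep Pw Ht) => w2 [Hw2 [Pw2 [[EF2 Hl]|[a [EFa Hl]]]]].
      - have Hp2 : ipair F (wordp w2) (wordp w').
          right; exists w2, w'; split => //; split => //; split; [by rewrite EF2|by left].
        case: Hl => [Hl|Hl]; [exact: Hstay Hw2 Hp2 Hl|exact: Hfr Hw2 Hp2 Hl].
      - rewrite EF in EFa.
        case: (Hmatch Pw' EFa Hl) => w1 [w3 [H1 [H2 [H3 [H4 [H5 H6]]]]]].
        apply: (Hmir (wordp w1) (wordp w3) (wordp w2)) => //.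
        + right; exists w, w1; split => //; split => //; split; [by rewrite H5|by left].
        + right; exists w2, w3; split => //; split => //; split; [by rewrite H6|by left].
    *
      case: (Gv_inv Ht) => [[El [k Hk]]|[[El Hk]|[El Hk]]].
      - apply: (Hmir (wordp (cGv :: w')) (wordp (cGv :: cV k :: w')) (wordp (cGv :: cV k :: w))) => //.
        + exact: wrefl.
        + rewrite El; apply: hstep2; exact: r_Gv_t.
        + by right; exists w, w'; do 3 (split => //); right; left.
        + right; exists (cV k :: w), (cV k :: w'); split => //; split => //.
          by split; [rewrite HF_cons EF -HF_cons|right; left].
      - apply: (Hmir (wordp (cGv :: w')) (wordp w') (wordp w)) => //.
        + exact: wrefl.
        + rewrite El; apply: hstep0; exact: r_Gv_e.
        + by right; exists w, w'; do 3 (split => //); right; left.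
        + by right; exists w, w'; do 3 (split => //); left.
      - apply: (Hmir (wordp (cGv :: w')) (wordp (cZ :: w')) (wordp (cZ :: w))) => //.
        + exact: wrefl.
        + rewrite El; apply: hstep1; exact: r_Gv_V.
        + by right; exists w, w'; do 3 (split => //); right; left.
        + by right; exists w, w'; do 3 (split => //); right; right.
    *
      case: (Z_inv Ht) => Hl Hk.
      apply: (Hmir (wordp (cZ :: w')) (wordp w') (wordp w)) => //.
      + exact: wrefl.
      + case: Hl => ->; apply: hstep0; [exact: r_Z_t|exact: r_Z_Z].
      + by right; exists w, w'; do 3 (split => //); right; right.
      + by right; exists w, w'; do 3 (split => //); left.
Qed.

End Phase.


Lemma X_inv l P' : step Delta (Cst cX) l P' ->
  (l = tau /\ pc P' (Cst cD)) \/ (l = lamU /\ pc P' (Par (Cst cD) (Cst cGv))).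
Proof.
move=> Hs; case: (step_sem Hs) => p [Hr Hp]; inversion Hr; subst.
- by right; split => //; apply: pc_sym.
- by left; split => //; apply: pc_sym.
Qed.

Lemma Y_inv l P' : step Delta (Cst cY) l P' -> l = tau /\ pc P' (Cst cD).
Proof. move=> Hs; case: (step_sem Hs) => p [Hr Hp]; inversion Hr; subst; split => //; exact: pc_sym. Qed.

Lemma pc_D0 : pc (Cst cD) (Par (Cst cD) (parl [::])).
Proof. apply: pc_sym; apply: pc_tr (pc_parC _ _) _; exact: pc_par_epsl. Qed.

Lemma pc_DGv : pc (Par (Cst cD) (Cst cGv)) (Par (Cst cD) (parl [:: wordp [:: cGv]])).
Proof.
apply: pc_par => //=; apply: pc_tr (pc_sym (pc_par_epsl _)) _; apply: pc_tr (pc_parC _ _) _.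
apply: pc_par => //; exact: pc_w1.
Qed.

Lemma DD_Gu_r r : DD (wordp (cGu :: map Uc r)).
Proof.
split; first exact: prod_D_Gu.
split => //; apply: plain_vcf; exact: allP_map.
Qed.

Lemma PhR_pcl c R (P1 P1' Q : P) : PhR c R P1 Q -> pc P1' P1 -> PhR c R P1' Q.
Proof.
move=> [L1 [L2 [H1 [H2 H3]]]] H; exists L1, L2; split => //; split => //.
exact: pc_tr H H2.
Qed.

Lemma tr_X k r P1 Q l P' : ucat (k :: r) = vcat (k :: r) ->
  Xr P1 Q -> step Delta P1 l P' -> TR P1 Q l P'.
Proof.
move=> Hsol [HX HQ] Hs; have Hs' := step_pc HX (pc_refl _) Hs.
set Gur := wordp (cGu :: map Uc r).
set Gvs := wordp (cGv :: map Uc (k :: r)).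
have Hsem : forall EL, sem (Par (Cst cD) (parl ([::] ++ Gur :: EL))) lamU
                        (Par (Cst cD) (parl ([::] ++ Gvs :: EL))).
  move=> EL; apply: rb_comp; apply: hstep2; exact: r_Gu_U.
have HD : forall EL, List.Forall DD EL -> PhR cD DrL (Par (Cst cD) (Cst cGv))
            (Par (Cst cD) (parl ([::] ++ Gvs :: EL))).
  move=> EL HEL; exists [:: wordp [:: cGv]], (Gvs :: EL); split; last split.
  - exists [::], [:: wordp [:: cGv]], [:: Gvs], [::], EL; split; first exact: perm_reflC.
    split; first exact: perm_reflC.
    split; first by constructor => //; exists [::], [::].
    split; first by constructor => //; exists [::], (k :: r).
    by split.
  - exact: pc_DGv.
  - exact: pc_refl.
case: (X_inv Hs') => [[-> Hp]|[-> Hp]].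
- case: HQ => [HY|[EL [HEL HE]]].
  + apply: (@TR_left _ _ _ _ (Cst cY) (Cst cD)).
    * exact: wrefl.
    * by exists (Cst cD); split => //; exact: r_Y_t.
    * by right; left; split => //; left.
    * by left.
  + apply: TR_right; do 3 right; left; exists [::], EL; split; last split => //.
    * by exists [::], [::], [::], [::], EL; fin.
    * apply: pc_tr Hp _; exact: pc_D0.
- case: HQ => [HY|[EL [HEL HE]]].
  + apply: (@TR_left _ _ _ _ (Par (Cst cD) (parl ([::] ++ Gur :: [::])))
                 (Par (Cst cD) (parl ([::] ++ Gvs :: [::])))).
    * apply: pc_wts HY (pc_refl _) _.
      apply: wts_trans (wts_sem1 (p := Cst cY) (q := Cst cD) _) _.
        by exists (Cst cD); split => //; exact: r_Y_t.
      apply: wts_trans (wrefl pc_D0) _.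
      apply: (produce (c := cD) (S := [:: Gur]) [::]).
      by constructor => //; exact: prod_D_Gu.
    * exact: Hsem.
    * right; left; split => //; right; exists [:: Gur]; split => //.
      by constructor => //; exact: DD_Gu_r.
    * do 3 right; left; apply: PhR_pcl (HD [::] _) Hp; constructor.
  + apply: (@TR_left _ _ _ _ (Par (Cst cD) (parl ([::] ++ Gur :: EL)))
                 (Par (Cst cD) (parl ([::] ++ Gvs :: EL)))).
    * apply: pc_wts HE (pc_refl _) _.
      apply: (produce (c := cD) (S := [:: Gur]) EL).
      by constructor => //; exact: prod_D_Gu.
    * exact: Hsem.
    * right; left; split => //; right; exists (Gur :: EL); split => //.
      by constructor => //; exact: DD_Gu_r.
    * do 3 right; left; exact: PhR_pcl (HD EL HEL) Hp.
Qed.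


Lemma tr_Xr P1 Q l P' : Xr Q P1 -> step Delta P1 l P' -> TR P1 Q l P'.
Proof.
move=> [HX [HY|[EL [HEL HE]]]] Hs.
- case: (Y_inv (step_pc HY (pc_refl _) Hs)) => -> Hp.
  apply: (@TR_left _ _ _ _ (Cst cX) (Cst cD)).
  + exact: wrefl.
  + by exists (Cst cD); split => //; exact: r_X_t.
  + by right; right; left; split => //; left.
  + by left.
- apply: (@TR_left _ _ _ _ P1 P').
  + apply: pc_wts HX HE _.
    apply: wts_trans (wts_sem1 (p := Cst cX) (q := Cst cD) _) _.
      by exists (Cst cD); split => //; exact: r_X_t.
    apply: wts_trans (wrefl pc_D0) _.
    have := produce (c := cD) (S := EL) [::] (Forall_DD_wts HEL); by rewrite cats0.
  + exact: step_sem.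
  + by left.
  + by left.
Qed.

Lemma BB_transfer (Hu : forall k, u k != [::]) (Hv : forall k, v k != [::]) k r :
  ucat (k :: r) = vcat (k :: r) ->
  forall P1 Q, BB P1 Q -> transfer Delta tau BB P1 Q.
Proof.
move=> Hsol P1 Q HB l P' Hs.
case: HB => [H|[H|[H|[H|[H|[H|[H|H]]]]]]].
- exact: tr_id H Hs.
- exact: tr_X Hsol H Hs.
- exact: tr_Xr H Hs.
- exact: tr_D H Hs.
- exact: tr_C H Hs.
- apply: (@tr_F _ Lc cI lamI (fun l => exists k, l = actN k) (fun a => actS a)) H Hs.
  + by move=> c w; rewrite Lc_cons [Lc [:: c]]Lc_cons cats0.
  + move=> l0 p Hr; inversion Hr; subst; [by right|by left; split => //; exists k0].
  + by move=> l0 [k0 ->]; exact: r_I_k.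
  + move=> w l0 r0 Hw Hst; case: (plain_step Hw Hst) => w2 [H1 [H2 [H3 _]]].
    by exists w2.
  + move=> w a rho x Hw E Hx; exact: (Lmatch Hu Hv Hw E Hx).
  + by move=> P2 Q2 HB; do 5 right; left.
- apply: (@tr_F _ Kc cS lamS (fun l => exists a, l = actS a) (fun k => actN k)) H Hs.
  + by move=> c w; rewrite Kc_cons [Kc [:: c]]Kc_cons cats0.
  + move=> l0 p Hr; inversion Hr; subst; [by right|by left; split => //; exists a].
  + by move=> l0 [a ->]; exact: r_S_a.
  + move=> w l0 r0 Hw Hst; case: (plain_step Hw Hst) => w2 [H1 [H2 [_ H3]]].
    by exists w2.
  + move=> w a rho x Hw E Hx; exact: (Kmatch Hw E Hx).
  + by move=> P2 Q2 HB; do 6 right; left.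
- exact: tr_C' H Hs.
Qed.

Theorem XY (Hu : forall k, u k != [::]) (Hv : forall k, v k != [::]) :
  PCP_solvable u v -> branching_bisimilar Delta tau (Cst cX) (Cst cY).
Proof.
case=> [[|k r] [Hs E]] //.
exists BB; split.
- apply: bb_of_transfer; first exact: BB_sym.
  move=> P1 Q HB; exact: (BB_transfer Hu Hv E HB).
- by right; left; split => //; left.
Qed.

End Main.


Theorem lemma6 (Sigma : finType) (n : nat) (u v : 'I_n -> seq Sigma) :
  1 < #|Sigma| ->
  (forall k, u k != [::]) -> (forall k, v k != [::]) ->
  PCP_solvable u v ->
  branching_bisimilar (G_rules u v) gtau (Cst cX) (Cst cY).
Proof.
move=> _ Hu Hv Hs; exact: (XY Hu Hv Hs).
Qed.
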